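(* Let $\Omega$ be the set of all valid triples $\{\varphi\}\ a\ \{\psi\}$ with $a\in\mathsf{Act}$ and $\varphi,\psi\subseteq\mathcal W(\Sigma)$. For every well-formed program $C$ and all assertions $\varphi,\psi\subseteq\mathcal W(\Sigma)$: if $\vDash\{\varphi\}\ C\ \{\psi\}$, then $\Omega\vdash\{\varphi\}\ C\ \{\psi\}$.
   Context: Semiring and weights. Let $\mathcal A=\langle U,+,\cdot,\mathbf 0,\mathbf 1\rangle$ be a partial semiring: $\langle U,+,\mathbf 0\rangle$ is a commutative monoid in which $+$ may be partial, $\langle U,\cdot,\mathbf 1\rangle$ is a monoid with $\cdot$ total, $\cdot$ distributes over $+$ on both sides, and $\mathbf 0\cdot u=u\cdot\mathbf 0=\mathbf 0$. Its natural order is $u\le v$ iff $u+w=v$ for some $w$. Assume $\mathcal A$ is naturally ordered ($\le$ is a partial order), Scott continuous (for every directed $D\subseteq U$ and $y\in U$: $\sup_{x\in D}(x+y)=(\sup D)+y$, $\sup_{x\in D}(x\cdot y)=(\sup D)\cdot y$, $\sup_{x\in D}(y\cdot x)=y\cdot\sup D$), and has a top element $\top\ge u$ for all $u\in U$. For a family $(u_i)_{i\in I}$, $\sum_{i\in I}u_i$ is the supremum of all finite sums over finite subsets of $I$. For a set $X$, $\mathcal W(X)$ is the set of maps $m:X\to U$ whose support $\mathrm{supp}(m)=\{x: m(x)\ne\mathbf 0\}$ is countable and whose mass $|m|=\sum_{x\in\mathrm{supp}(m)}m(x)$ is defined. Operations on $\mathcal W(X)$ are pointwise ($m_1+m_2$,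 $u\cdot m$, $m\cdot u$, $\mathbf 0$), and $m_1\sqsubseteq m_2$ iff $m_1+m=m_2$ for some $m$. Let $\eta(x)(y)=\mathbf 1$ if $x=y$ and $\mathbf 0$ otherwise, and for $f:X\to\mathcal W(Y)$ let $f^\dagger(m)(y)=\sum_{x\in\mathrm{supp}(m)}m(x)\cdot f(x)(y)$. Programs. Fix a set $\Sigma$ of states, a set $\mathsf{Act}$ of atomic actions with interpretation $[\![a]\!]_{\mathsf{Act}}:\Sigma\to\mathcal W(\Sigma)$, and $\mathsf{Test}\subseteq 2^\Sigma$. Programs are $C::=\mathsf{skip}\mid C_1;C_2\mid C_1+C_2\mid\mathsf{assume}\ e\mid C^{\langle e,e'\rangle}\mid a$ with $a\in\mathsf{Act}$; expressions $e::=b\mid u$ with $u\in U$; tests $b::=\mathsf{true}\mid\mathsf{false}\mid b_1\vee b_2\mid b_1\wedge b_2\mid\neg b\mid t$ with $t\in\mathsf{Test}$. Tests evaluate to $[\![b]\!](\sigma)\in\{\mathbf 0,\mathbf 1\}$ by Boolean evaluation ($\mathbf 1$ = true) with $[\![t]\!](\sigma)=\mathbf 1$ iff $\sigma\in t$; $[\![u]\!](\sigma)=u$. Semantics: $[\![\mathsf{skip}]\!](\sigma)=\eta(\sigma)$; $[\![C_1;C_2]\!](\sigma)=[\![C_2]\!]^\dagger([\![C_1]\!](\sigma))$; $[\![C_1+C_2]\!](\sigma)=[\![C_1]\!](\sigma)+[\![C_2]\!](\sigma)$; $[\![a]\!]=[\![a]\!]_{\mathsf{Act}}$; $[\![\mathsf{assume}\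 e]\!](\sigma)=[\![e]\!](\sigma)\cdot\eta(\sigma)$; $[\![C^{\langle e,e'\rangle}]\!]$ is the least fixed point (pointwise order on functions $\Sigma\to\mathcal W(\Sigma)$) of $\Phi(f)(\sigma)=[\![e]\!](\sigma)\cdot f^\dagger([\![C]\!](\sigma))+[\![e']\!](\sigma)\cdot\eta(\sigma)$. A program is well-formed if its semantics is a total function. Assertions and triples. Assertions are subsets of $\mathcal W(\Sigma)$. For $\phi:T\to 2^{\mathcal W(\Sigma)}$, $\bigoplus_{x\in T}\phi(x)=\{\sum_{t\in T}m_t : m_t\in\phi(t)\ \forall t\in T\}$, $\varphi\oplus\psi$ is the case $T=\{1,2\}$, $u\odot\varphi=\{u\cdot m:m\in\varphi\}$, $\varphi\odot u=\{m\cdot u:m\in\varphi\}$. $\vDash\{\varphi\}\ C\ \{\psi\}$ iff $[\![C]\!]^\dagger(m)\in\psi$ for all $m\in\varphi$. Proof system. $\Gamma\vdash\{\varphi\}C\{\psi\}$ means derivable using the triples in $\Gamma$ as axioms and the rules: (Skip) $\{\varphi\}\mathsf{skip}\{\varphi\}$. (Seq) from $\{\varphi\}C_1\{\vartheta\}$, $\{\vartheta\}C_2\{\psi\}$ infer $\{\varphi\}C_1;C_2\{\psi\}$. (Plus) from $\{\varphi\}C_1\{\psi_1\}$, $\{\varphi\}C_2\{\psi_2\}$ infer $\{\varphi\}C_1+C_2\{\psi_1\oplus\psi_2\}$. (Assume) if $[\![e]\!](\sigma)=u$ for all $m\in\varphi$, $\sigma\in\mathrm{supp}(m)$, then $\{\varphi\}\mathsf{assume}\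 e\{\varphi\odot u\}$. (Iter) if $(\psi_n)_{n\in\mathbb N}$ converges to $\psi_\infty$ (whenever $m_n\in\psi_n$ for all $n$, $\sum_n m_n\in\psi_\infty$) and for all $n$, $\{\varphi_n\}\mathsf{assume}\ e;C\{\varphi_{n+1}\}$ and $\{\varphi_n\}\mathsf{assume}\ e'\{\psi_n\}$, then $\{\varphi_0\}C^{\langle e,e'\rangle}\{\psi_\infty\}$. (False) $\{\emptyset\}C\{\varphi\}$. (True) $\{\varphi\}C\{\mathcal W(\Sigma)\}$. (Scale) from $\{\varphi\}C\{\psi\}$ infer $\{u\odot\varphi\}C\{u\odot\psi\}$. (Disj)/(Conj) from $\{\varphi_i\}C\{\psi_i\}$, $i=1,2$, infer $\{\varphi_1\cup\varphi_2\}C\{\psi_1\cup\psi_2\}$, resp. $\{\varphi_1\cap\varphi_2\}C\{\psi_1\cap\psi_2\}$. (Choice) from $\{\phi(t)\}C\{\phi'(t)\}$ for all $t\in T$ infer $\{\bigoplus_{x\in T}\phi(x)\}C\{\bigoplus_{x\in T}\phi'(x)\}$. (Exists) from the same infer $\{\bigcup_t\phi(t)\}C\{\bigcup_t\phi'(t)\}$. (Consequence) from $\varphi'\subseteq\varphi$, $\{\varphi\}C\{\psi\}$, $\psi\subseteq\psi'$ infer $\{\varphi'\}C\{\psi'\}$. *)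

(* Defs.v *)
From Stdlib Require Import List ClassicalEpsilon.
Import ListNotations.
Set Implicit Arguments.

Definition obind {T S : Type} (o : option T) (f : T -> option S) : option S :=
  match o with Some x => f x | None => None end.

Record PSR := {
  car :> Type;
  padd : car -> car -> option car;
  pmul : car -> car -> car;
  zero : car;
  one : car;
  padd_comm : forall u v, padd u v = padd v u;
  padd_assoc : forall u v w,
      obind (padd u v) (fun x => padd x w) = obind (padd v w) (fun y => padd u y);
  padd_0 : forall u, padd u zero = Some u;
  pmul_assoc : forall u v w, pmul u (pmul v w) = pmul (pmul u v) w;
  pmul_1l : forall u, pmul one u = u;
  pmul_1r : forall u, pmul u one = u;
  pmul_addl : forall u v w s, padd v w = Some s ->
      padd (pmul u v) (pmul u w) = Some (pmul u s);
  pmul_addr : forall u v w s, padd v w = Some s ->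
      padd (pmul v u) (pmul w u) = Some (pmul s u);
  pmul_0l : forall u, pmul zero u = zero;
  pmul_0r : forall u, pmul u zero = zero
}.

Section Semiring.
Variable A : PSR.

Definition nle (u v : A) : Prop := exists w, padd A u w = Some v.

Definition naturally_ordered : Prop :=
  (forall u, nle u u) /\
  (forall u v w, nle u v -> nle v w -> nle u w) /\
  (forall u v, nle u v -> nle v u -> u = v).

Definition is_lub (D : A -> Prop) (s : A) : Prop :=
  (forall x, D x -> nle x s) /\ (forall b, (forall x, D x -> nle x b) -> nle s b).

Definition directed (D : A -> Prop) : Prop :=
  (exists x, D x) /\
  (forall x y, D x -> D y -> exists z, D z /\ nle x z /\ nle y z).

Definition scott_continuous : Prop :=
  (forall D, directed D -> exists s, is_lub D s) /\
  (forall D y s, directed D -> is_lub D s ->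
     (forall x, D x -> exists v, padd A x y = Some v) ->
     exists t, padd A s y = Some t /\
       is_lub (fun z => exists x, D x /\ padd A x y = Some z) t) /\
  (forall D y s, directed D -> is_lub D s ->
     is_lub (fun z => exists x, D x /\ z = pmul A x y) (pmul A s y)) /\
  (forall D y s, directed D -> is_lub D s ->
     is_lub (fun z => exists x, D x /\ z = pmul A y x) (pmul A y s)).

Definition has_top : Prop := exists top : A, forall u, nle u top.

Definition fsum {I : Type} (u : I -> A) (l : list I) : option A :=
  fold_right (fun i acc => obind acc (fun a => padd A (u i) a)) (Some (zero A)) l.

(* sum_{i in I} u_i is defined and equals s: every finite sub-sum is defined and
   s is the supremum of the finite sub-sums *)
Definition Sum {I : Type} (u : I -> A) (s : A) : Prop :=
  (forall l, NoDup l -> exists v, fsum u l = Some v) /\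
  is_lub (fun v => exists l, NoDup l /\ fsum u l = Some v) s.

Definition supp {X : Type} (m : X -> A) : Type := { x : X | m x <> zero A }.

Definition isW {X : Type} (m : X -> A) : Prop :=
  (exists f : supp m -> nat, forall a b, f a = f b -> a = b) /\
  (exists s, Sum (fun x : supp m => m (proj1_sig x)) s).

Definition eta {X : Type} (x : X) : X -> A :=
  fun y => if excluded_middle_informative (x = y) then one A else zero A.

Definition wle {X : Type} (m1 m2 : X -> A) : Prop :=
  exists m, isW m /\ forall x, padd A (m1 x) (m x) = Some (m2 x).

Definition WAdd {X : Type} (m1 m2 r : X -> A) : Prop :=
  isW r /\ forall x, padd A (m1 x) (m2 x) = Some (r x).

Definition BindF {X Y : Type} (f : X -> Y -> A) (m : X -> A) (r : Y -> A) : Prop :=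
  isW r /\
  forall y, Sum (fun x : supp m => pmul A (m (proj1_sig x)) (f (proj1_sig x) y)) (r y).

Definition WSum {X T : Type} (ms : T -> X -> A) (r : X -> A) : Prop :=
  isW r /\ forall x, Sum (fun t => ms t x) (r x).

End Semiring.

Arguments nle {A}. Arguments is_lub {A}. Arguments directed {A}.
Arguments fsum {A I}. Arguments Sum {A I}. Arguments supp {A X}.
Arguments isW {A X}. Arguments eta {A X}. Arguments wle {A X}.
Arguments WAdd {A X}. Arguments BindF {A X Y}. Arguments WSum {A X T}.

Section Programs.
Variable A : PSR.
Variable Sigma : Type.
Variable Act : Type.
Variable actI : Act -> Sigma -> Sigma -> A.
Variable TestI : Type.
Variable testI : TestI -> Sigma -> Prop.        (* Test = { testI t | t : TestI } *)

Inductive test : Type :=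
| TTrue | TFalse
| TOr (b1 b2 : test) | TAnd (b1 b2 : test) | TNot (b : test)
| TAtom (t : TestI).

Inductive expr : Type :=
| EB (b : test)
| EU (u : A).

Inductive prog : Type :=
| Skip
| Seq (C1 C2 : prog)
| Plus (C1 C2 : prog)
| Assume (e : expr)
| Iter (C : prog) (e e' : expr)
| Atom (a : Act).

Fixpoint teval (b : test) (s : Sigma) : Prop :=
  match b with
  | TTrue => True
  | TFalse => False
  | TOr b1 b2 => teval b1 s \/ teval b2 s
  | TAnd b1 b2 => teval b1 s /\ teval b2 s
  | TNot b => ~ teval b s
  | TAtom t => testI t s
  end.

Definition eval (e : expr) (s : Sigma) : A :=
  match e with
  | EB b => if excluded_middle_informative (teval b s) then one A else zero A
  | EU u => u
  end.

Definition PhiRel (dC : Sigma -> (Sigma -> A) -> Prop) (e e' : expr)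
    (F : Sigma -> Sigma -> A) (s : Sigma) (r : Sigma -> A) : Prop :=
  exists mc b, dC s mc /\ BindF F mc b /\
    WAdd (fun y => pmul A (eval e s) (b y))
         (fun y => pmul A (eval e' s) (eta s y)) r.

Definition IsLfp (dC : Sigma -> (Sigma -> A) -> Prop) (e e' : expr)
    (F : Sigma -> Sigma -> A) : Prop :=
  (forall s, isW (F s)) /\ (forall s, PhiRel dC e e' F s (F s)) /\
  (forall G : Sigma -> Sigma -> A,
      (forall s, isW (G s)) -> (forall s, PhiRel dC e e' G s (G s)) ->
      forall s, wle (F s) (G s)).

(* den C s m  :  [[C]](s) is defined and equals m *)
Fixpoint den (C : prog) : Sigma -> (Sigma -> A) -> Prop :=
  match C with
  | Skip => fun s m => m = eta s
  | Seq C1 C2 => fun s m =>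
      exists m1 g, den C1 s m1 /\
        (forall x, m1 x <> zero A -> den C2 x (g x)) /\ BindF g m1 m
  | Plus C1 C2 => fun s m =>
      exists m1 m2, den C1 s m1 /\ den C2 s m2 /\ WAdd m1 m2 m
  | Assume e => fun s m => m = (fun y => pmul A (eval e s) (eta s y))
  | Iter C e e' => fun s m => exists F, IsLfp (den C) e e' F /\ F s = m
  | Atom a => fun s m => m = actI a s
  end.

Definition well_formed (C : prog) : Prop :=
  forall s, exists m, den C s m /\ isW m.

Definition asrt := (Sigma -> A) -> Prop.

Definition SubW (p : asrt) : Prop := forall m, p m -> isW m.

Definition valid (phi : asrt) (C : prog) (psi : asrt) : Prop :=
  forall m, phi m ->
    exists g r, (forall x, m x <> zero A -> den C x (g x)) /\ BindF g m r /\ psi r.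

Definition bigoplus (T : Type) (P : T -> asrt) : asrt :=
  fun m => exists ms : T -> Sigma -> A, (forall t, P t (ms t)) /\ WSum ms m.

Definition oplus (p q : asrt) : asrt :=
  bigoplus (fun b : bool => if b then p else q).

Definition scaleL (u : A) (p : asrt) : asrt :=
  fun m => exists m0, p m0 /\ m = (fun s => pmul A u (m0 s)).

Definition scaleR (p : asrt) (u : A) : asrt :=
  fun m => exists m0, p m0 /\ m = (fun s => pmul A (m0 s) u).

Definition converges (ps : nat -> asrt) (pinf : asrt) : Prop :=
  forall ms : nat -> Sigma -> A, (forall n, ps n (ms n)) ->
    exists r, WSum ms r /\ pinf r.

Definition triples := asrt -> prog -> asrt -> Prop.

(* Gamma |- {phi} C {psi}.  Every derived triple has assertions that are subsets
   of W(Sigma) (side conditions on each rule's conclusion). *)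
Inductive derives (Gamma : triples) : asrt -> prog -> asrt -> Prop :=
| R_Ax : forall phi C psi, Gamma phi C psi -> SubW phi -> SubW psi ->
    derives Gamma phi C psi
| R_Skip : forall phi, SubW phi -> derives Gamma phi Skip phi
| R_Seq : forall phi th psi C1 C2, SubW phi -> SubW psi ->
    derives Gamma phi C1 th -> derives Gamma th C2 psi ->
    derives Gamma phi (Seq C1 C2) psi
| R_Plus : forall phi psi1 psi2 C1 C2, SubW phi -> SubW (oplus psi1 psi2) ->
    derives Gamma phi C1 psi1 -> derives Gamma phi C2 psi2 ->
    derives Gamma phi (Plus C1 C2) (oplus psi1 psi2)
| R_Assume : forall phi e u, SubW phi -> SubW (scaleR phi u) ->
    (forall m s, phi m -> m s <> zero A -> eval e s = u) ->
    derives Gamma phi (Assume e) (scaleR phi u)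
| R_Iter : forall (phis psis : nat -> asrt) psiinf C e e',
    SubW (phis 0) -> SubW psiinf ->
    converges psis psiinf ->
    (forall n, derives Gamma (phis n) (Seq (Assume e) C) (phis (S n))) ->
    (forall n, derives Gamma (phis n) (Assume e') (psis n)) ->
    derives Gamma (phis 0) (Iter C e e') psiinf
| R_False : forall C phi, SubW phi -> derives Gamma (fun _ => False) C phi
| R_True : forall phi C, SubW phi -> derives Gamma phi C (fun m => isW m)
| R_Scale : forall phi C psi u, SubW (scaleL u phi) -> SubW (scaleL u psi) ->
    derives Gamma phi C psi -> derives Gamma (scaleL u phi) C (scaleL u psi)
| R_Disj : forall phi1 phi2 psi1 psi2 C,
    SubW (fun m => phi1 m \/ phi2 m) -> SubW (fun m => psi1 m \/ psi2 m) ->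
    derives Gamma phi1 C psi1 -> derives Gamma phi2 C psi2 ->
    derives Gamma (fun m => phi1 m \/ phi2 m) C (fun m => psi1 m \/ psi2 m)
| R_Conj : forall phi1 phi2 psi1 psi2 C,
    SubW (fun m => phi1 m /\ phi2 m) -> SubW (fun m => psi1 m /\ psi2 m) ->
    derives Gamma phi1 C psi1 -> derives Gamma phi2 C psi2 ->
    derives Gamma (fun m => phi1 m /\ phi2 m) C (fun m => psi1 m /\ psi2 m)
| R_Choice : forall (T : Type) (P P' : T -> asrt) C,
    SubW (bigoplus P) -> SubW (bigoplus P') ->
    (forall t, derives Gamma (P t) C (P' t)) ->
    derives Gamma (bigoplus P) C (bigoplus P')
| R_Exists : forall (T : Type) (P P' : T -> asrt) C,
    SubW (fun m => exists t, P t m) -> SubW (fun m => exists t, P' t m) ->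
    (forall t, derives Gamma (P t) C (P' t)) ->
    derives Gamma (fun m => exists t, P t m) C (fun m => exists t, P' t m)
| R_Conseq : forall phi phi' psi psi' C, SubW phi' -> SubW psi' ->
    (forall m, phi' m -> phi m) -> derives Gamma phi C psi ->
    (forall m, psi m -> psi' m) ->
    derives Gamma phi' C psi'.

Definition Omega : triples :=
  fun phi C psi => SubW phi /\ SubW psi /\ (exists a, C = Atom a) /\ valid phi C psi.

End Programs.

(* Main.v *)
Require Import Defs.
From Stdlib Require Import List ClassicalEpsilon ProofIrrelevance FunctionalExtensionality Permutation Lia Arith.
Import ListNotations.
Set Implicit Arguments.
Unset Strict Implicit.

Lemma choice_fun : forall (X Y : Type) (P : X -> Y -> Prop), (forall x, exists y, P x y) ->
  exists f : X -> Y, forall x, P x (f x).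
Proof.
  intros X Y P H. exists (fun x => proj1_sig (constructive_indefinite_description _ (H x))).
  intros x. apply (proj2_sig (constructive_indefinite_description _ (H x))).
Qed.

Section Alg.
Variable A : PSR.
Hypothesis Hord : naturally_ordered A.
Hypothesis Hsc : scott_continuous A.

Local Notation z0 := (zero A).
Local Notation pa := (padd A).
Local Notation pm := (pmul A).
Implicit Types u v w r p q a b c d s t : A.

Lemma padd_0l : forall u, pa z0 u = Some u.
Proof. intros; rewrite padd_comm; apply padd_0. Qed.

Lemma nle_refl : forall u, nle u u.
Proof. destruct Hord as [H _]; auto. Qed.
Lemma nle_trans : forall u v w, nle u v -> nle v w -> nle u w.
Proof. destruct Hord as [_ [H _]]; eauto. Qed.
Lemma nle_antisym : forall u v, nle u v -> nle v u -> u = v.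
Proof. destruct Hord as [_ [_ H]]; eauto. Qed.
Lemma nle_0 : forall u, nle z0 u.
Proof. intros; exists u; apply padd_0l. Qed.
Lemma nle_addr : forall u v w, pa u v = Some w -> nle u w.
Proof. intros; exists v; auto. Qed.
Lemma nle_addl : forall u v w, pa u v = Some w -> nle v w.
Proof. intros; exists u; rewrite padd_comm; auto. Qed.
Lemma le0_eq : forall u, nle u z0 -> u = z0.
Proof. intros; apply nle_antisym; auto using nle_0. Qed.

Lemma assoc_fwd : forall u v w (x : A) r, pa u v = Some x -> pa x w = Some r ->
  exists y, pa v w = Some y /\ pa u y = Some r.
Proof.
  intros u v w x r H1 H2. pose proof (padd_assoc A u v w) as H.
  rewrite H1 in H; simpl in H. rewrite H2 in H.
  destruct (pa v w) as [y|] eqn:E; simpl in H; [|discriminate]. eauto.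
Qed.
Lemma assoc_bwd : forall u v w (y : A) r, pa v w = Some y -> pa u y = Some r ->
  exists x, pa u v = Some x /\ pa x w = Some r.
Proof.
  intros u v w y r H1 H2. pose proof (padd_assoc A u v w) as H.
  rewrite H1 in H; simpl in H. rewrite H2 in H.
  destruct (pa u v) as [x|] eqn:E; simpl in H; [|discriminate]. eauto.
Qed.

Lemma swap_mid : forall (x y z : A) w p q r, pa x y = Some p -> pa z w = Some q -> pa p q = Some r ->
  exists p' q', pa x z = Some p' /\ pa y w = Some q' /\ pa p' q' = Some r.
Proof.
  intros x y z w p q r H1 H2 H3.
  destruct (assoc_fwd H1 H3) as [t [Ht1 Ht2]].
  destruct (assoc_bwd H2 Ht1) as [s [Hs1 Hs2]].
  rewrite padd_comm in Hs1.
  destruct (assoc_fwd Hs1 Hs2) as [t' [Ht'1 Ht'2]].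
  destruct (assoc_bwd Ht'2 Ht2) as [p' [Hp1 Hp2]].
  exists p', t'; auto.
Qed.

Lemma add_below : forall u u' v v' w', nle u u' -> nle v v' -> pa u' v' = Some w' ->
  exists w, pa u v = Some w /\ nle w w'.
Proof.
  intros u u' v v' w' [a Ha] [b Hb] H.
  destruct (swap_mid Ha Hb H) as [p [q [H1 [H2 H3]]]].
  exists p; split; auto. exists q; auto.
Qed.

Lemma add_mono_l : forall a a' b c c', nle a a' -> pa a b = Some c -> pa a' b = Some c' -> nle c c'.
Proof.
  intros a a' b c c' [d Hd] H1 H2.
  rewrite padd_comm in Hd.
  destruct (assoc_fwd Hd H2) as [y [Hy1 Hy2]]. rewrite Hy1 in H1; inversion H1; subst.
  exists d; rewrite padd_comm; auto.
Qed.

Lemma add_mono : forall a a' b b' c c', nle a a' -> nle b b' -> pa a b = Some c -> pa a' b' = Some c' -> nle c c'.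
Proof.
  intros a a' b b' c c' H1 H2 H3 H4.
  destruct (add_below H1 (nle_refl b') H4) as [m [Hm1 Hm2]].
  eapply nle_trans; [|apply Hm2].
  rewrite padd_comm in H3, Hm1. exact (add_mono_l H2 H3 Hm1).
Qed.

Lemma mul_mono_l : forall c u v, nle u v -> nle (pm c u) (pm c v).
Proof. intros c u v [w Hw]; exists (pm c w); apply pmul_addl; auto. Qed.
Lemma mul_mono_r : forall c u v, nle u v -> nle (pm u c) (pm v c).
Proof. intros c u v [w Hw]; exists (pm w c); apply pmul_addr; auto. Qed.

Lemma lub_unique : forall P s t, is_lub P s -> is_lub P t -> s = t.
Proof. intros P s t [H1 H2] [H3 H4]; apply nle_antisym; auto. Qed.

Lemma lub_ext : forall (P Q : A -> Prop) s, (forall z, P z <-> Q z) -> is_lub P s -> is_lub Q s.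
Proof.
  intros P Q s HPQ [H1 H2]; split.
  - intros x Hx; apply H1, HPQ, Hx.
  - intros b Hb; apply H2; intros x Hx; apply Hb, HPQ, Hx.
Qed.

Lemma lub_cofinal : forall (P Q : A -> Prop) s, (forall z, P z -> Q z) ->
  (forall z, Q z -> exists z', P z' /\ nle z z') -> (is_lub P s <-> is_lub Q s).
Proof.
  intros P Q s HPQ HQP; split; intros [H1 H2]; split.
  - intros z Hz; destruct (HQP z Hz) as [z' [Hz' Hle]]; eapply nle_trans; eauto.
  - intros b Hb; apply H2; intros x Hx; apply Hb, HPQ, Hx.
  - intros z Hz; apply H1, HPQ, Hz.
  - intros b Hb; apply H2; intros x Hx. destruct (HQP x Hx) as [z' [Hz' Hle]]. eapply nle_trans; eauto.
Qed.


Section FS.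
Variable I : Type.
Implicit Types (f g h : I -> A) (l : list I).

Lemma fsum_cons : forall f i l, fsum f (i :: l) = obind (fsum f l) (fun a => pa (f i) a).
Proof. reflexivity. Qed.

Lemma fsum_app_inv : forall f l1 l2 c, fsum f (l1 ++ l2) = Some c ->
  exists a b, fsum f l1 = Some a /\ fsum f l2 = Some b /\ pa a b = Some c.
Proof.
  intros f l1; induction l1 as [|i l1 IH]; intros l2 c H.
  - exists z0, c; simpl; repeat split; auto using padd_0l.
  - simpl in H. destruct (fsum f (l1 ++ l2)) as [c'|] eqn:E; simpl in H; [|discriminate].
    destruct (IH _ _ E) as [a [b [H1 [H2 H3]]]].
    destruct (assoc_bwd H3 H) as [x [Hx1 Hx2]].
    exists x, b; repeat split; auto. simpl; rewrite H1; simpl; auto.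
Qed.

Lemma fsum_app : forall f l1 l2 a b c, fsum f l1 = Some a -> fsum f l2 = Some b -> pa a b = Some c ->
  fsum f (l1 ++ l2) = Some c.
Proof.
  intros f l1; induction l1 as [|i l1 IH]; intros l2 a b c H1 H2 H3.
  - simpl in H1; inversion H1; subst. rewrite padd_0l in H3; inversion H3; subst; auto.
  - simpl in H1. destruct (fsum f l1) as [a'|] eqn:E; simpl in H1; [|discriminate].
    destruct (assoc_fwd H1 H3) as [y [Hy1 Hy2]].
    simpl. rewrite (IH _ _ _ _ eq_refl H2 Hy1); simpl; auto.
Qed.

Lemma fsum_perm : forall f l l', Permutation l l' -> fsum f l = fsum f l'.
Proof.
  intros f l l' H; induction H; simpl; auto.
  - rewrite IHPermutation; auto.
  - destruct (fsum f l) as [a|]; simpl; auto.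
    pose proof (padd_assoc A (f y) (f x) a) as H1.
    pose proof (padd_assoc A (f x) (f y) a) as H2.
    rewrite padd_comm in H1. rewrite H1 in H2. 
    destruct (pa (f x) a) as [b|] eqn:Eb; destruct (pa (f y) a) as [c|] eqn:Ec; simpl in *; auto.
  - congruence.
Qed.

Lemma perm_extract : forall l1 l2, NoDup l1 -> incl l1 l2 -> exists l3, Permutation l2 (l1 ++ l3).
Proof.
  intros l1; induction l1 as [|i l1 IH]; intros l2 Hnd Hinc.
  - exists l2; simpl; auto.
  - inversion Hnd; subst.
    assert (Hi : In i l2) by (apply Hinc; left; auto).
    destruct (in_split _ _ Hi) as [p [q Hpq]]; subst.
    assert (Hinc' : incl l1 (p ++ q)).
    { intros x Hx. assert (In x (p ++ i :: q)) by (apply Hinc; right; auto).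
      apply in_app_or in H. apply in_or_app. destruct H as [H|[H|H]]; auto; subst; contradiction. }
    destruct (IH _ H2 Hinc') as [l3 Hl3]. exists l3.
    simpl. eapply perm_trans; [apply Permutation_sym, Permutation_middle|]. auto.
Qed.

Lemma fsum_sub : forall f l1 l2 b, NoDup l1 -> incl l1 l2 -> fsum f l2 = Some b ->
  exists a, fsum f l1 = Some a /\ nle a b.
Proof.
  intros f l1 l2 b Hnd Hinc H.
  destruct (perm_extract Hnd Hinc) as [l3 Hp].
  rewrite (fsum_perm f Hp) in H.
  destruct (fsum_app_inv H) as [a [c [H1 [H2 H3]]]].
  exists a; split; auto. exists c; auto.
Qed.

Lemma fsum_bound : forall f g l b, (forall i, nle (f i) (g i)) -> fsum g l = Some b ->
  exists a, fsum f l = Some a /\ nle a b.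
Proof.
  intros f g l; induction l as [|i l IH]; intros b Hle H.
  - simpl in *; inversion H; subst; exists z0; split; auto using nle_refl.
  - simpl in H. destruct (fsum g l) as [b'|] eqn:E; simpl in H; [|discriminate].
    destruct (IH _ Hle eq_refl) as [a' [Ha' Hle']].
    destruct (add_below (Hle i) Hle' H) as [w [Hw1 Hw2]].
    exists w; split; auto. simpl; rewrite Ha'; simpl; auto.
Qed.

Lemma fsum_add : forall f g h, (forall i, pa (f i) (g i) = Some (h i)) -> forall l c,
  fsum h l = Some c <-> exists a b, fsum f l = Some a /\ fsum g l = Some b /\ pa a b = Some c.
Proof.
  intros f g h Hfg l; induction l as [|i l IH]; intros c; split.
  - simpl; intros H; inversion H; subst. exists z0, z0; repeat split; auto using padd_0.
  - simpl; intros [a [b [H1 [H2 H3]]]]; inversion H1; inversion H2; subst. rewrite padd_0 in H3; auto.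
  - simpl; intros H. destruct (fsum h l) as [c'|] eqn:E; simpl in H; [|discriminate].
    destruct (proj1 (IH c') eq_refl) as [a [b [H1 [H2 H3]]]].
    destruct (swap_mid (Hfg i) H3 H) as [p [q [Hp [Hq Hpq]]]].
    exists p, q; rewrite H1, H2; simpl; auto.
  - simpl; intros [a [b [H1 [H2 H3]]]].
    destruct (fsum f l) as [a'|] eqn:Ea; simpl in H1; [|discriminate].
    destruct (fsum g l) as [b'|] eqn:Eb; simpl in H2; [|discriminate].
    destruct (swap_mid H1 H2 H3) as [p [q [Hp [Hq Hpq]]]].
    rewrite (Hfg i) in Hp; inversion Hp; subst.
    assert (fsum h l = Some q) by (apply IH; eauto). rewrite H; simpl; auto.
Qed.

Lemma fsum_mull : forall f l c a, fsum f l = Some a -> fsum (fun i => pm c (f i)) l = Some (pm c a).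
Proof.
  intros f l; induction l as [|i l IH]; intros c a H; simpl in *.
  - inversion H; subst; rewrite pmul_0r; auto.
  - destruct (fsum f l) as [a'|] eqn:E; simpl in H; [|discriminate].
    rewrite (IH c a' eq_refl); simpl. apply pmul_addl; auto.
Qed.

Lemma fsum_mulr : forall f l c a, fsum f l = Some a -> fsum (fun i => pm (f i) c) l = Some (pm a c).
Proof.
  intros f l; induction l as [|i l IH]; intros c a H; simpl in *.
  - inversion H; subst; rewrite pmul_0l; auto.
  - destruct (fsum f l) as [a'|] eqn:E; simpl in H; [|discriminate].
    rewrite (IH c a' eq_refl); simpl. apply pmul_addr; auto.
Qed.

Lemma fsum_zero : forall f l, (forall i, In i l -> f i = z0) -> fsum f l = Some z0.
Proof.
  intros f l; induction l as [|i l IH]; intros H; simpl; auto.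
  rewrite IH by (intros; apply H; right; auto). simpl. rewrite H by (left; auto). apply padd_0.
Qed.

Lemma fsum_one : forall f l i0, NoDup l -> (forall i, i <> i0 -> f i = z0) ->
  fsum f l = Some (if excluded_middle_informative (In i0 l) then f i0 else z0).
Proof.
  intros f l i0; induction l as [|i l IH]; intros Hnd H; simpl.
  - destruct (excluded_middle_informative False); [contradiction|auto].
  - inversion Hnd; subst. rewrite IH by auto. simpl.
    destruct (excluded_middle_informative (In i0 l)) as [Hin|Hin];
    destruct (excluded_middle_informative (i = i0 \/ In i0 l)) as [Hin'|Hin'].
    + assert (i <> i0) by (intro; subst; contradiction). rewrite (H i) by auto. apply padd_0l.
    + exfalso; auto.
    + destruct Hin' as [E|E]; [subst|contradiction]. apply padd_0.
    + assert (i <> i0) by (intro; subst; auto). rewrite (H i) by auto. apply padd_0.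
Qed.

Lemma fsum_map : forall (J : Type) (h : J -> I) f (l : list J), fsum f (map h l) = fsum (fun j => f (h j)) l.
Proof. intros J h f l; induction l; simpl; auto. rewrite IHl; auto. Qed.

Definition nzb f (i : I) : bool := if excluded_middle_informative (f i = z0) then false else true.

Lemma fsum_filter_nz : forall f l, fsum f l = fsum f (filter (nzb f) l).
Proof.
  intros f l; induction l as [|i l IH]; simpl; auto.
  unfold nzb at 1. destruct (excluded_middle_informative (f i = z0)) as [E|E]; simpl.
  - rewrite <- IH. rewrite E. destruct (fsum f l); simpl; auto. rewrite padd_0l; auto.
  - rewrite IH; auto.
Qed.

Definition fs f l : A := match fsum f l with Some v => v | None => z0 end.

Lemma fs_eq : forall f l a, fsum f l = Some a -> fs f l = a.
Proof. intros; unfold fs; rewrite H; auto. Qed.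

End FS.


Definition FSset (I : Type) (f : I -> A) : A -> Prop := fun v => exists l, NoDup l /\ fsum f l = Some v.
Definition FDef (I : Type) (f : I -> A) : Prop := forall l, NoDup l -> exists v, fsum f l = Some v.

Lemma nodup_merge : forall (I : Type) (l1 l2 : list I), exists l, NoDup l /\ incl l1 l /\ incl l2 l.
Proof.
  intros I l1 l2.
  assert (dec : forall x y : I, {x = y} + {x <> y}) by (intros; apply excluded_middle_informative).
  exists (nodup dec (l1 ++ l2)); repeat split.
  - apply NoDup_nodup.
  - intros x Hx; apply nodup_In, in_or_app; auto.
  - intros x Hx; apply nodup_In, in_or_app; auto.
Qed.

Section Sums.
Variable I : Type.
Implicit Types (f g h : I -> A) (l : list I).

Lemma Sum_unique : forall f s t, Sum f s -> Sum f t -> s = t.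
Proof. intros f s t [_ H1] [_ H2]; eapply lub_unique; eauto. Qed.

Lemma Sum_le_elem : forall f s i, Sum f s -> nle (f i) s.
Proof.
  intros f s i [_ [H _]]. apply H. exists [i]; split.
  - constructor; auto. constructor.
  - simpl. rewrite padd_0; auto.
Qed.

Lemma FS_directed : forall f, FDef f -> directed (FSset f).
Proof.
  intros f HD; split.
  - exists z0, []; split; auto. constructor.
  - intros x y [l1 [N1 E1]] [l2 [N2 E2]].
    destruct (nodup_merge l1 l2) as [l [N [I1 I2]]].
    destruct (HD l N) as [v Hv].
    exists v; split; [exists l; auto|].
    destruct (fsum_sub N1 I1 Hv) as [a [Ha Hle]]; rewrite E1 in Ha; inversion Ha; subst.
    destruct (fsum_sub N2 I2 Hv) as [b [Hb Hle']]; rewrite E2 in Hb; inversion Hb; subst. auto.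
Qed.

Lemma Sum_exists : forall f, FDef f -> exists s, Sum f s.
Proof.
  intros f HD. destruct Hsc as [H1 _]. destruct (H1 _ (FS_directed HD)) as [s Hs].
  exists s; split; auto.
Qed.

Lemma Sum_bound : forall f g t, (forall i, nle (f i) (g i)) -> Sum g t -> exists s, Sum f s /\ nle s t.
Proof.
  intros f g t Hle [HD [Hub Hl]].
  assert (HDf : FDef f).
  { intros l N. destruct (HD l N) as [v Hv]. destruct (fsum_bound Hle Hv) as [a [Ha _]]. eauto. }
  destruct (Sum_exists HDf) as [s Hs]. exists s; split; auto.
  destruct Hs as [_ [_ Hl']]. apply Hl'. intros x [l [N Hx]].
  destruct (HD l N) as [v Hv]. destruct (fsum_bound Hle Hv) as [a [Ha Hle']].
  rewrite Hx in Ha; inversion Ha; subst. eapply nle_trans; [apply Hle'|]. apply Hub; exists l; auto.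
Qed.

Lemma Sum_mono : forall f g s t, (forall i, nle (f i) (g i)) -> Sum f s -> Sum g t -> nle s t.
Proof.
  intros f g s t Hle Hf Hg. destruct (Sum_bound Hle Hg) as [s' [Hs' Hle']].
  rewrite (Sum_unique Hf Hs'); auto.
Qed.

Lemma Sum_one : forall f i0, (forall i, i <> i0 -> f i = z0) -> Sum f (f i0).
Proof.
  intros f i0 H.
  assert (E : forall l, NoDup l -> fsum f l = Some (if excluded_middle_informative (In i0 l) then f i0 else z0))
    by (intros; apply fsum_one; auto).
  split.
  - intros l N; eauto.
  - split.
    + intros x [l [N Hx]]. rewrite E in Hx by auto. inversion Hx; subst.
      destruct (excluded_middle_informative (In i0 l)); auto using nle_refl, nle_0.
    + intros b Hb. apply Hb. exists [i0]; split; [constructor; auto; constructor|].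
      simpl; rewrite padd_0; auto.
Qed.

Lemma Sum_zero : forall f, (forall i, f i = z0) -> Sum f z0.
Proof.
  intros f H. assert (E : forall l, fsum f l = Some z0) by (intros; apply fsum_zero; auto).
  split.
  - intros l _; eauto.
  - split.
    + intros x [l [_ Hx]]. rewrite E in Hx; inversion Hx; subst; apply nle_refl.
    + intros b Hb. apply nle_0.
Qed.

Lemma Sum_mull : forall f s c, Sum f s -> Sum (fun i => pm c (f i)) (pm c s).
Proof.
  intros f s c [HD Hl]. split.
  - intros l N. destruct (HD l N) as [v Hv]. exists (pm c v); apply fsum_mull; auto.
  - destruct Hsc as [_ [_ [_ H4]]].
    pose proof (H4 (FSset f) c s (FS_directed HD) Hl) as H.
    eapply lub_ext; [|apply H]. intros z; split.
    + intros [x [[l [N Hx]] Ez]]; subst. exists l; split; auto. apply fsum_mull; auto.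
    + intros [l [N Hz]]. destruct (HD l N) as [v Hv]. exists v; split; [exists l; auto|].
      rewrite (fsum_mull c Hv) in Hz. inversion Hz; auto.
Qed.

Lemma Sum_mulr : forall f s c, Sum f s -> Sum (fun i => pm (f i) c) (pm s c).
Proof.
  intros f s c [HD Hl]. split.
  - intros l N. destruct (HD l N) as [v Hv]. exists (pm v c); apply fsum_mulr; auto.
  - destruct Hsc as [_ [_ [H3 _]]].
    pose proof (H3 (FSset f) c s (FS_directed HD) Hl) as H.
    eapply lub_ext; [|apply H]. intros z; split.
    + intros [x [[l [N Hx]] Ez]]; subst. exists l; split; auto. apply fsum_mulr; auto.
    + intros [l [N Hz]]. destruct (HD l N) as [v Hv]. exists v; split; [exists l; auto|].
      rewrite (fsum_mulr c Hv) in Hz. inversion Hz; auto.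
Qed.

Lemma Sum_ext : forall f g s, (forall i, f i = g i) -> Sum f s -> Sum g s.
Proof. intros f g s H; replace g with f; auto. apply functional_extensionality; auto. Qed.

End Sums.

Lemma Sum_reindex : forall (I J : Type) (h : J -> I) (f : I -> A) s,
  (forall a b : J, h a = h b -> a = b) -> (forall i, f i <> z0 -> exists j, h j = i) ->
  (Sum (fun j => f (h j)) s <-> Sum f s).
Proof.
  intros I J h f s Hinj Hsurj.
  assert (Lift : forall l : list I, (forall i, In i l -> f i <> z0) -> exists l' : list J, map h l' = l).
  { induction l as [|i l IH]; intros H.
    - exists []; auto.
    - destruct IH as [l' Hl']; [intros; apply H; right; auto|].
      destruct (Hsurj i) as [j Hj]; [apply H; left; auto|]. exists (j :: l'); simpl; congruence. }
  assert (Key : forall l : list I, NoDup l -> exists l' : list J, NoDup l' /\ fsum f l = fsum (fun j => f (h j)) l').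
  { intros l N. destruct (Lift (filter (nzb f) l)) as [l' Hl'].
    - intros i Hi. apply filter_In in Hi. destruct Hi as [_ Hi]. unfold nzb in Hi.
      destruct (excluded_middle_informative (f i = z0)); congruence.
    - exists l'; split.
      + apply NoDup_map_inv with (f := h). rewrite Hl'. apply NoDup_filter; auto.
      + rewrite fsum_filter_nz, <- Hl', fsum_map; auto. }
  assert (ND : forall l' : list J, NoDup l' -> NoDup (map h l')).
  { intros l' N. apply FinFun.Injective_map_NoDup; auto. }
  assert (EQ : forall z, FSset (fun j => f (h j)) z <-> FSset f z).
  { intros z; split.
    - intros [l' [N Hz]]. exists (map h l'); split; auto. rewrite fsum_map; auto.
    - intros [l [N Hz]]. destruct (Key l N) as [l' [N' E]]. exists l'; split; auto; congruence. }
  split; intros [HD Hl]; split.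
  - intros l N. destruct (Key l N) as [l' [N' E]]. rewrite E; auto.
  - eapply lub_ext; [|apply Hl]; auto.
  - intros l' N'. rewrite <- fsum_map. apply HD; auto.
  - eapply lub_ext; [|apply Hl]; intros z; symmetry; apply (EQ z).
Qed.


Lemma Sum_bool : forall (f : bool -> A) s, Sum f s -> pa (f true) (f false) = Some s.
Proof.
  intros f s [HD [Hub Hl]].
  assert (N : NoDup [true; false]) by (repeat constructor; simpl; intuition discriminate).
  destruct (HD _ N) as [v Hv].
  assert (Ev : pa (f true) (f false) = Some v).
  { simpl in Hv. rewrite padd_0 in Hv. simpl in Hv. auto. }
  rewrite Ev. f_equal. apply nle_antisym.
  - apply Hub. exists [true; false]; auto.
  - apply Hl. intros x [l [Nl Hx]].
    assert (Hinc : incl l [true; false]) by (intros [|] _; simpl; auto).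
    destruct (fsum_sub Nl Hinc Hv) as [a [Ha Hle]]. rewrite Hx in Ha; inversion Ha; subst; auto.
Qed.

Lemma Sum_nat_prefix : forall (f : nat -> A) s,
  (forall k, exists v, fsum f (seq 0 k) = Some v) ->
  is_lub (fun z => exists k, fsum f (seq 0 k) = Some z) s -> Sum f s.
Proof.
  intros f s HD Hl.
  assert (Sub : forall l, NoDup l -> incl l (seq 0 (S (list_max l)))).
  { intros l _ x Hx. apply in_seq. split; [lia|].
    assert (x <= list_max l).
    { pose proof (proj1 (list_max_le l (list_max l)) (le_n _)) as HF.
      rewrite Forall_forall in HF; auto. }
    lia. }
  assert (HF : FDef f).
  { intros l N. destruct (HD (S (list_max l))) as [v Hv].
    destruct (fsum_sub N (Sub l N) Hv) as [a [Ha _]]; eauto. }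
  split; auto.
  refine (proj1 (lub_cofinal (P := fun z => exists k, fsum f (seq 0 k) = Some z) (Q := FSset f) s
     _ _) Hl).
  - intros z [k Hk]. exists (seq 0 k); split; auto. apply seq_NoDup.
  - intros z [l [N Hz]]. destruct (HD (S (list_max l))) as [v Hv].
    destruct (fsum_sub N (Sub l N) Hv) as [a [Ha Hle]]. rewrite Hz in Ha; inversion Ha; subst.
    exists v; split; eauto.
Qed.

Definition dirK (K : Type) (R : K -> K -> Prop) : Prop :=
  inhabited K /\ forall k1 k2, exists k3, R k1 k3 /\ R k2 k3.

Definition rng (K : Type) (u : K -> A) : A -> Prop := fun z => exists k, z = u k.

Lemma net_directed : forall (K : Type) (R : K -> K -> Prop) (u : K -> A), dirK R ->
  (forall k k', R k k' -> nle (u k) (u k')) -> directed (rng u).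
Proof.
  intros K R u [[k0] HK] Hm; split.
  - exists (u k0), k0; auto.
  - intros x y [k1 E1] [k2 E2]; subst. destruct (HK k1 k2) as [k3 [H1 H2]].
    exists (u k3); repeat split; eauto. exists k3; auto.
Qed.

Lemma net_add : forall (K : Type) (R : K -> K -> Prop) (u v w : K -> A) U V, dirK R ->
  (forall k k', R k k' -> nle (u k) (u k')) -> (forall k k', R k k' -> nle (v k) (v k')) ->
  (forall k, pa (u k) (v k) = Some (w k)) -> is_lub (rng u) U -> is_lub (rng v) V ->
  exists W, pa U V = Some W /\ is_lub (rng w) W.
Proof.
  intros K R u v w U V HK Hu Hv Hw HU HV.
  destruct Hsc as [_ [S2 _]].
  assert (Def1 : forall k j, exists t, pa (u k) (v j) = Some t /\ exists k3, nle t (w k3)).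
  { intros k j. destruct (proj2 HK k j) as [k3 [H1 H2]].
    destruct (add_below (Hu _ _ H1) (Hv _ _ H2) (Hw k3)) as [t [Ht Hle]]. eauto. }
  assert (Step1 : forall j, exists t, pa U (v j) = Some t /\
            is_lub (fun z => exists x, rng u x /\ pa x (v j) = Some z) t).
  { intros j. apply S2; auto.
    - eapply net_directed; eauto.
    - intros x [k Ek]; subst. destruct (Def1 k j) as [t [Ht _]]; eauto. }
  destruct (choice_fun Step1) as [tf Htf]. 
  assert (Step2 : exists T, pa V U = Some T /\
            is_lub (fun z => exists x, rng v x /\ pa x U = Some z) T).
  { apply S2; auto.
    - eapply net_directed; eauto.
    - intros x [j Ej]; subst. exists (tf j). rewrite padd_comm; apply Htf. }
  destruct Step2 as [T [HT1 HT2]].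
  exists T; split; [rewrite padd_comm; auto|].
  split.
  - intros z [k Ek]; subst.
    assert (Hle1 : nle (w k) (tf k)).
    { destruct (Htf k) as [Ht _]. eapply add_mono; [| apply nle_refl | apply Hw | apply Ht].
      apply (proj1 HU). exists k; auto. }
    eapply nle_trans; [apply Hle1|]. apply (proj1 HT2). exists (v k); split; [exists k; auto|].
    rewrite padd_comm; apply Htf.
  - intros b Hb. apply (proj2 HT2). intros z [x [[j Ej] Hz]]; subst.
    rewrite padd_comm in Hz. destruct (Htf j) as [Ht Hlub]. rewrite Ht in Hz; inversion Hz; subst.
    apply (proj2 Hlub). intros z [x [[k Ek] Hz']]; subst.
    destruct (Def1 k j) as [t [Ht' [k3 Hle]]]. rewrite Ht' in Hz'; inversion Hz'; subst.
    eapply nle_trans; [apply Hle|]. apply Hb; exists k3; auto.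
Qed.


Lemma net_fsum : forall (I K : Type) (R : K -> K -> Prop) (N : I -> K -> A) (r : I -> A), dirK R ->
  (forall i k k', R k k' -> nle (N i k) (N i k')) ->
  (forall i, is_lub (rng (N i)) (r i)) ->
  forall L, (forall k, exists z, fsum (fun i => N i k) L = Some z) ->
  exists S, fsum r L = Some S /\ is_lub (fun z => exists k, fsum (fun i => N i k) L = Some z) S.
Proof.
  intros I K R N r HK Hm Hr L; induction L as [|i L IH]; intros HD.
  - exists z0; split; auto. destruct HK as [[k0] _]. split.
    + intros z [k Hk]; simpl in Hk; inversion Hk; apply nle_refl.
    + intros b Hb; apply Hb; exists k0; auto.
  - assert (HD' : forall k, exists z, fsum (fun i => N i k) L = Some z).
    { intros k; destruct (HD k) as [z Hz]; simpl in Hz.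
      destruct (fsum (fun i => N i k) L); simpl in Hz; [eauto|discriminate]. }
    destruct (IH HD') as [S' [HS'1 HS'2]].
    set (v := fun k => fs (fun i => N i k) L).
    set (w := fun k => fs (fun i => N i k) (i :: L)).
    assert (Hw : forall k, pa (N i k) (v k) = Some (w k)).
    { intros k. destruct (HD k) as [z Hz]. unfold w, v. rewrite (fs_eq Hz).
      simpl in Hz. destruct (fsum (fun i => N i k) L) as [z'|] eqn:E; simpl in Hz; [|discriminate].
      rewrite (fs_eq E); auto. }
    assert (Hvm : forall k k', R k k' -> nle (v k) (v k')).
    { intros k k' Hkk. unfold v. destruct (HD' k') as [z Hz]. rewrite (fs_eq Hz).
      destruct (fsum_bound (f := fun i => N i k) (fun j => Hm j _ _ Hkk) Hz) as [a [Ha Hle]].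
      rewrite (fs_eq Ha); auto. }
    assert (HV : is_lub (rng v) S').
    { eapply lub_ext; [|apply HS'2]. intros z; split.
      - intros [k Hk]. exists k. unfold v; rewrite (fs_eq Hk); auto.
      - intros [k Hk]; subst. destruct (HD' k) as [z Hz]. exists k. unfold v; rewrite (fs_eq Hz); auto. }
    destruct (net_add HK (Hm i) Hvm Hw (Hr i) HV) as [W [HW1 HW2]].
    exists W; split.
    + simpl. rewrite HS'1; simpl; auto.
    + eapply lub_ext; [|apply HW2]. intros z; split.
      * intros [k Hk]; subst. destruct (HD k) as [z Hz]. exists k. unfold w; rewrite (fs_eq Hz); auto.
      * intros [k Hk]. exists k. unfold w; rewrite (fs_eq Hk); auto.
Qed.

Definition KL (I : Type) := { l : list I | NoDup l }.
Definition RL (I : Type) (k k' : KL I) : Prop := incl (proj1_sig k) (proj1_sig k').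

Lemma dirKL : forall I : Type, dirK (@RL I).
Proof.
  intros I; split.
  - constructor. exists []. constructor.
  - intros [l1 N1] [l2 N2]. destruct (nodup_merge l1 l2) as [l [N [H1 H2]]].
    exists (exist _ l N); unfold RL; simpl; auto.
Qed.

Lemma KL_mono : forall (I : Type) (f : I -> A), FDef f ->
  forall k k' : KL I, RL k k' -> nle (fs f (proj1_sig k)) (fs f (proj1_sig k')).
Proof.
  intros I f HD [l N] [l' N'] H; unfold RL in H; simpl in *.
  destruct (HD l' N') as [v Hv]. destruct (fsum_sub N H Hv) as [a [Ha Hle]].
  rewrite (fs_eq Ha), (fs_eq Hv); auto.
Qed.

Lemma KL_lub : forall (I : Type) (f : I -> A) s, Sum f s -> is_lub (rng (fun k : KL I => fs f (proj1_sig k))) s.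
Proof.
  intros I f s [HD Hl]. eapply lub_ext; [|apply Hl]. intros z; split.
  - intros [l [N Hz]]. exists (exist _ l N); simpl; rewrite (fs_eq Hz); auto.
  - intros [[l N] Hz]; simpl in Hz; subst. destruct (HD l N) as [v Hv]. exists l; split; auto.
    rewrite (fs_eq Hv); auto.
Qed.

Lemma Sum_add_inv : forall (I : Type) (f g h : I -> A) c, Sum h c ->
  (forall i, pa (f i) (g i) = Some (h i)) ->
  exists s t, Sum f s /\ Sum g t /\ pa s t = Some c.
Proof.
  intros I f g h c Hh Hfg.
  destruct (Sum_bound (f := f) (fun i => nle_addr (Hfg i)) Hh) as [s [Hs _]].
  destruct (Sum_bound (f := g) (fun i => nle_addl (Hfg i)) Hh) as [t [Ht _]].
  assert (Hw : forall k : KL I, pa (fs f (proj1_sig k)) (fs g (proj1_sig k)) = Some (fs h (proj1_sig k))).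
  { intros [l N]; simpl. destruct (proj1 Hh l N) as [v Hv].
    destruct (proj1 (fsum_add Hfg l v) Hv) as [a [b [H1 [H2 H3]]]].
    rewrite (fs_eq H1), (fs_eq H2), (fs_eq Hv); auto. }
  destruct (net_add (dirKL I) (KL_mono (proj1 Hs)) (KL_mono (proj1 Ht)) Hw (KL_lub Hs) (KL_lub Ht))
    as [W [HW1 HW2]].
  rewrite (lub_unique HW2 (KL_lub Hh)) in HW1. eauto.
Qed.

Lemma opt_eq : forall (o1 o2 : option A), (forall c, o1 = Some c <-> o2 = Some c) -> o1 = o2.
Proof.
  intros [a|] [b|] H.
  - apply H; auto.
  - discriminate (proj1 (H a) eq_refl).
  - discriminate (proj2 (H b) eq_refl).
  - reflexivity.
Qed.

Lemma fin_fubini : forall (X Z : Type) (a : X -> Z -> A) (L : list X) (Zl : list Z),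
  (forall x, exists v, fsum (a x) Zl = Some v) ->
  (forall z, exists v, fsum (fun x => a x z) L = Some v) ->
  fsum (fun x => fs (a x) Zl) L = fsum (fun z => fs (fun x => a x z) L) Zl.
Proof.
  intros X Z a L Zl H1; induction L as [|x L IH]; intros H2.
  - simpl. symmetry; apply fsum_zero. intros; unfold fs; simpl; auto.
  - assert (H2' : forall z, exists v, fsum (fun x => a x z) L = Some v).
    { intros z; destruct (H2 z) as [v Hv]; simpl in Hv.
      destruct (fsum (fun x => a x z) L); simpl in Hv; [eauto|discriminate]. }
    simpl. rewrite (IH H2').
    assert (Hw : forall z, pa (a x z) (fs (fun x => a x z) L) = Some (fs (fun x => a x z) (x :: L))).
    { intros z. destruct (H2 z) as [v Hv]. rewrite (fs_eq Hv). simpl in Hv.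
      destruct (fsum (fun x => a x z) L) as [v'|] eqn:E; simpl in Hv; [|discriminate].
      rewrite (fs_eq E); auto. }
    apply opt_eq. intros c. rewrite (fsum_add Hw Zl c).
    destruct (H1 x) as [p Hp]. rewrite (fs_eq Hp). split.
    + intros H. destruct (fsum (fun z => fs (fun x => a x z) L) Zl) as [q|] eqn:E; simpl in H; [|discriminate].
      exists p, q; auto.
    + intros [p' [q [Hp' [Hq Hpq]]]]. rewrite Hp in Hp'; inversion Hp'; subst. rewrite Hq; simpl; auto.
Qed.

Lemma Sum_le_fsum : forall (I : Type) (f : I -> A) s l v, Sum f s -> NoDup l -> fsum f l = Some v -> nle v s.
Proof. intros I f s l v [_ [H _]] N Hv. apply H; exists l; auto. Qed.

Lemma fubini : forall (X Z : Type) (a : X -> Z -> A) (r : X -> A) T,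
  (forall x, Sum (a x) (r x)) -> Sum r T ->
  exists c : Z -> A, (forall z, Sum (fun x => a x z) (c z)) /\ Sum c T.
Proof.
  intros X Z a r T Ha Hr.
  assert (Step1 : forall z, exists cz, Sum (fun x => a x z) cz).
  { intros z. destruct (Sum_bound (f := fun x => a x z) (fun x => Sum_le_elem z (Ha x)) Hr) as [cz [H _]]; eauto. }
  destruct (choice_fun Step1) as [c Hc]. exists c; split; auto.
  assert (DF : forall (L : list X) (Zl : list Z), NoDup L -> NoDup Zl ->
     exists w, fsum (fun x => fs (a x) Zl) L = Some w /\ nle w T).
  { intros L Zl NL NZ. destruct (proj1 Hr L NL) as [v Hv].
    assert (Hle : forall x, nle (fs (a x) Zl) (r x)).
    { intros x. destruct (proj1 (Ha x) Zl NZ) as [u Hu]. rewrite (fs_eq Hu). eapply Sum_le_fsum; eauto. }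
    destruct (fsum_bound Hle Hv) as [w [Hw Hle']]. exists w; split; auto.
    eapply nle_trans; [apply Hle'|]. eapply Sum_le_fsum; eauto. }
  assert (FF : forall (L : list X) (Zl : list Z), NoDup L -> NoDup Zl ->
     fsum (fun x => fs (a x) Zl) L = fsum (fun z => fs (fun x => a x z) L) Zl).
  { intros L Zl NL NZ. apply fin_fubini.
    - intros x; apply (proj1 (Ha x)); auto.
    - intros z; apply (proj1 (Hc z)); auto. }
  assert (FC : forall Zl : list Z, NoDup Zl -> exists S, fsum c Zl = Some S /\
     is_lub (fun w => exists k : KL X, fsum (fun z => fs (fun x => a x z) (proj1_sig k)) Zl = Some w) S).
  { intros Zl NZ.
    apply (net_fsum (R := @RL X) (N := fun z (k : KL X) => fs (fun x => a x z) (proj1_sig k)) (dirKL X)).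
    - intros z; apply KL_mono. exact (proj1 (Hc z)).
    - intros z; apply KL_lub; auto.
    - intros [L NL]; simpl. rewrite <- (FF L Zl NL NZ). destruct (DF L Zl NL NZ) as [w [Hw _]]; eauto. }
  split.
  - intros Zl NZ. destruct (FC Zl NZ) as [S [HS _]]; eauto.
  - split.
    + intros v [Zl [NZ Hv]]. destruct (FC Zl NZ) as [S [HS Hlub]]. rewrite Hv in HS; inversion HS; subst.
      apply (proj2 Hlub). intros w [[L NL] Hw]; simpl in Hw.
      rewrite <- (FF L Zl NL NZ) in Hw. destruct (DF L Zl NL NZ) as [w' [Hw' Hle]].
      rewrite Hw in Hw'; inversion Hw'; subst; auto.
    + intros b Hb. apply (proj2 (proj2 Hr)). intros v [L [NL Hv]].
      assert (HN : exists S, fsum r L = Some S /\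
         is_lub (fun w => exists k : KL Z, fsum (fun x => fs (a x) (proj1_sig k)) L = Some w) S).
      { apply (net_fsum (R := @RL Z) (N := fun x (k : KL Z) => fs (a x) (proj1_sig k)) (dirKL Z)).
        - intros x; apply KL_mono. exact (proj1 (Ha x)).
        - intros x; apply KL_lub; auto.
        - intros [Zl NZ]; simpl. destruct (DF L Zl NL NZ) as [w [Hw _]]; eauto. }
      destruct HN as [S [HS Hlub]]. rewrite Hv in HS; inversion HS; subst.
      apply (proj2 Hlub). intros w [[Zl NZ] Hw]; simpl in Hw.
      rewrite (FF L Zl NL NZ) in Hw.
      destruct (FC Zl NZ) as [S' [HS' _]].
      assert (Hle : forall z, nle (fs (fun x => a x z) L) (c z)).
      { intros z. destruct (proj1 (Hc z) L NL) as [u Hu]. rewrite (fs_eq Hu). eapply Sum_le_fsum; eauto. }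
      destruct (fsum_bound Hle HS') as [w' [Hw' Hle']]. rewrite Hw in Hw'; inversion Hw'; subst.
      eapply nle_trans; [apply Hle'|]. apply Hb. exists Zl; auto.
Qed.

Lemma dirK_nat : dirK le.
Proof. split; [constructor; exact 0|]. intros k1 k2; exists (max k1 k2); lia. Qed.

Lemma mct : forall (X : Type) (c : nat -> X -> A) (S : nat -> A) (l : X -> A) R,
  (forall k k' x, k <= k' -> nle (c k x) (c k' x)) ->
  (forall k, Sum (c k) (S k)) ->
  (forall x, is_lub (rng (fun k => c k x)) (l x)) ->
  is_lub (rng S) R -> Sum l R.
Proof.
  intros X c S l R Hm HS Hl HR.
  assert (FL : forall L, NoDup L -> exists Sv, fsum l L = Some Sv /\
     is_lub (fun z => exists k, fsum (fun x => c k x) L = Some z) Sv).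
  { intros L NL. apply (net_fsum (R := le) (N := fun x k => c k x) dirK_nat).
    - intros x k k' H; apply Hm; auto.
    - auto.
    - intros k. apply (proj1 (HS k)); auto. }
  split.
  - intros L NL; destruct (FL L NL) as [Sv [H _]]; eauto.
  - split.
    + intros v [L [NL Hv]]. destruct (FL L NL) as [Sv [H Hlub]]. rewrite Hv in H; inversion H; subst.
      apply (proj2 Hlub). intros z [k Hz]. eapply nle_trans; [eapply Sum_le_fsum; eauto|].
      apply (proj1 HR). exists k; auto.
    + intros b Hb. apply (proj2 HR). intros z [k Ez]; subst.
      apply (proj2 (proj2 (HS k))). intros v [L [NL Hv]].
      destruct (FL L NL) as [Sv [H Hlub]]. eapply nle_trans; [apply (proj1 Hlub); exists k; eauto|].
      apply Hb; exists L; auto.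
Qed.


Section W.
Variable X : Type.
Implicit Types (m : X -> A).

Lemma supp_inj : forall m (a b : supp m), proj1_sig a = proj1_sig b -> a = b.
Proof.
  intros m [x Hx] [y Hy]; simpl; intros E; subst. f_equal; apply proof_irrelevance.
Qed.

Lemma Sum_supp : forall m (f : X -> A) s, (forall x, m x = z0 -> f x = z0) ->
  (Sum (fun t : supp m => f (proj1_sig t)) s <-> Sum f s).
Proof.
  intros m f s H. apply Sum_reindex.
  - apply supp_inj.
  - intros x Hx. assert (Hm : m x <> z0) by (intro E; apply Hx, H, E).
    exists (exist _ x Hm); auto.
Qed.

Lemma isW_iff : forall m, isW m <-> (exists f : supp m -> nat, forall a b : supp m, f a = f b -> a = b) /\ exists s, Sum m s.
Proof.
  intros m; unfold isW; split; intros [H1 [s Hs]]; split; auto; exists s.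
  - apply (proj1 (Sum_supp (m := m) (f := m) s (fun x E => E))); auto.
  - apply (proj2 (Sum_supp (m := m) (f := m) s (fun x E => E))); auto.
Qed.

Lemma BindF_iff : forall (Y : Type) (g : X -> Y -> A) m (r : Y -> A),
  BindF g m r <-> isW r /\ forall y, Sum (fun x => pm (m x) (g x y)) (r y).
Proof.
  intros Y g m r.
  assert (Z : forall y x, m x = z0 -> pm (m x) (g x y) = z0) by (intros y x E; rewrite E; apply pmul_0l).
  unfold BindF; split; intros [H1 H2]; split; auto; intros y.
  - apply (proj1 (Sum_supp (m := m) (f := fun x => pm (m x) (g x y)) (r y) (Z y))); auto.
  - apply (proj2 (Sum_supp (m := m) (f := fun x => pm (m x) (g x y)) (r y) (Z y))); auto.
Qed.

Lemma isW_le : forall m m', (forall y, nle (m y) (m' y)) -> isW m' -> isW m.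
Proof.
  intros m m' Hle Hm'. apply isW_iff in Hm'. destruct Hm' as [[f Hf] [s Hs]].
  apply isW_iff. split.
  - assert (Hne : forall y, m y <> z0 -> m' y <> z0).
    { intros y H E. apply H, le0_eq. rewrite <- E; auto. }
    exists (fun (t : supp m) => f (exist _ (proj1_sig t) (Hne _ (proj2_sig t)))).
    intros a0 b0 E. apply Hf in E. apply supp_inj. apply (f_equal (@proj1_sig _ _)) in E. auto.
  - destruct (Sum_bound Hle Hs) as [t [Ht _]]; eauto.
Qed.

Lemma isW_mull : forall m u, isW m -> isW (fun y => pm u (m y)).
Proof.
  intros m u Hm. apply isW_iff in Hm. destruct Hm as [[f Hf] [s Hs]].
  apply isW_iff. split.
  - assert (Hne : forall y, pm u (m y) <> z0 -> m y <> z0).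
    { intros y H E. apply H. rewrite E; apply pmul_0r. }
    exists (fun (t : supp (fun y => pm u (m y))) => f (exist _ (proj1_sig t) (Hne _ (proj2_sig t)))).
    intros a0 b0 E. apply Hf in E. apply supp_inj. apply (f_equal (@proj1_sig _ _)) in E. auto.
  - exists (pm u s). apply Sum_mull; auto.
Qed.

Lemma isW_single : forall m x0, (forall y, y <> x0 -> m y = z0) -> isW m.
Proof.
  intros m x0 H. apply isW_iff. split.
  - exists (fun _ => 0). intros [a Ha] [b Hb] _. apply supp_inj; simpl.
    destruct (excluded_middle_informative (a = x0)); destruct (excluded_middle_informative (b = x0)); subst; auto;
    exfalso; [apply Hb|apply Ha|apply Ha]; apply H; auto.
  - exists (m x0); apply Sum_one; auto.
Qed.

Lemma isW_zero : forall m, (forall y, m y = z0) -> isW m.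
Proof.
  intros m H. apply isW_iff. split.
  - exists (fun _ => 0). intros [a Ha]. exfalso; auto.
  - exists z0; apply Sum_zero; auto.
Qed.

Lemma eta_same : forall x : X, eta (A := A) x x = one A.
Proof. intros; unfold eta; destruct (excluded_middle_informative (x = x)); congruence. Qed.
Lemma eta_diff : forall x y : X, x <> y -> eta (A := A) x y = z0.
Proof. intros; unfold eta; destruct (excluded_middle_informative (x = y)); congruence. Qed.

Lemma isW_eta : forall x : X, isW (A := A) (eta x).
Proof. intros x; apply isW_single with x. intros y H; apply eta_diff; auto. Qed.

Lemma BindF_eta : forall (Y : Type) (g : X -> Y -> A) x, isW (g x) -> BindF g (eta x) (g x).
Proof.
  intros Y g x H. apply BindF_iff; split; auto. intros y.
  assert (H1 : Sum (fun x' => pm (eta x x') (g x' y)) (pm (eta x x) (g x y))).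
  { apply Sum_one with (f := fun x' => pm (eta x x') (g x' y)).
    intros i Hi. rewrite eta_diff by auto. apply pmul_0l. }
  rewrite eta_same, pmul_1l in H1; auto.
Qed.

Lemma BindF_unique : forall (Y : Type) (g g' : X -> Y -> A) m (r r' : Y -> A),
  BindF g m r -> BindF g' m r' -> (forall x, m x <> z0 -> g x = g' x) -> r = r'.
Proof.
  intros Y g g' m r r' H1 H2 H. apply BindF_iff in H1; apply BindF_iff in H2.
  apply functional_extensionality; intros y.
  eapply Sum_unique; [apply (proj2 H1 y)|].
  eapply Sum_ext; [|apply (proj2 H2 y)]. intros x; simpl.
  destruct (excluded_middle_informative (m x = z0)) as [E|E].
  - rewrite E, !pmul_0l; auto.
  - rewrite H; auto.
Qed.

End W.

End Alg.


Section Prog.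
Variable A : PSR.
Hypothesis Hord : naturally_ordered A.
Hypothesis Hsc : scott_continuous A.
Variables (Sigma Act : Type) (actI : Act -> Sigma -> Sigma -> A).
Hypothesis HactW : forall a s, isW (actI a s).
Variables (TestI : Type) (testI : TestI -> Sigma -> Prop).

Local Notation z0 := (zero A).
Local Notation pa := (padd A).
Local Notation pm := (pmul A).
Local Notation den := (den actI testI).
Local Notation prog := (prog A Act TestI).
Local Notation derives := (derives testI (Omega actI testI)).
Local Notation ev := (eval testI).

Lemma BindF_sum : forall (g : Sigma -> Sigma -> A) m r, BindF g m r ->
  forall y, Sum (fun x => pm (m x) (g x y)) (r y).
Proof. intros g m r H. exact (proj2 (proj1 (BindF_iff g m r) H)). Qed.
Lemma BindF_mk : forall (g : Sigma -> Sigma -> A) m r, isW r ->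
  (forall y, Sum (fun x => pm (m x) (g x y)) (r y)) -> BindF g m r.
Proof. intros g m r H1 H2. apply (proj2 (BindF_iff g m r)); auto. Qed.

Definition Def (C : prog) (s : Sigma) := exists m, den C s m.
Definition Post (C : prog) (m : Sigma -> A) (r : Sigma -> A) :=
  exists g, (forall x, m x <> z0 -> den C x (g x)) /\ BindF g m r.
Definition PL (C : prog) := forall s, Def C s -> derives (fun m => m = eta s) C (den C s).

Lemma den_isW : forall C s m, den C s m -> isW m.
Proof.
  induction C; simpl; intros s m H.
  - subst; apply isW_eta; auto.
  - destruct H as [m1 [g [_ [_ H]]]]; apply H.
  - destruct H as [m1 [m2 [_ [_ H]]]]; apply H.
  - subst. apply isW_mull; auto. apply isW_eta; auto.
  - destruct H as [F [HF E]]; subst. apply (proj1 HF).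
  - subst; auto.
Qed.

Lemma den_det : forall C s m m', den C s m -> den C s m' -> m = m'.
Proof.
  induction C; simpl; intros s m m' H H'.
  - congruence.
  - destruct H as [m1 [g [H1 [H2 H3]]]]. destruct H' as [m1' [g' [H1' [H2' H3']]]].
    rewrite <- (IHC1 _ _ _ H1 H1') in H2', H3'.
    eapply BindF_unique; eauto.
  - destruct H as [m1 [m2 [H1 [H2 [_ H3]]]]]. destruct H' as [m1' [m2' [H1' [H2' [_ H3']]]]].
    rewrite <- (IHC1 _ _ _ H1 H1') in H3'. rewrite <- (IHC2 _ _ _ H2 H2') in H3'.
    apply functional_extensionality; intros y. specialize (H3 y); specialize (H3' y). congruence.
  - congruence.
  - destruct H as [F [HF E]]; destruct H' as [F' [HF' E']]; subst.
    apply functional_extensionality; intros y.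
    destruct (proj2 (proj2 HF) F' (proj1 HF') (proj1 (proj2 HF')) s) as [d [_ Hd]].
    destruct (proj2 (proj2 HF') F (proj1 HF) (proj1 (proj2 HF)) s) as [d' [_ Hd']].
    apply (nle_antisym Hord); [exists (d y)|exists (d' y)]; auto.
  - congruence.
Qed.

Lemma Post_det : forall C m r r', Post C m r -> Post C m r' -> r = r'.
Proof.
  intros C m r r' [g [Hg H]] [g' [Hg' H']]. eapply BindF_unique; eauto.
  intros x Hx; eapply den_det; eauto.
Qed.

Lemma Post_isW : forall C m r, Post C m r -> isW r.
Proof. intros C m r [g [_ [H _]]]; auto. Qed.

Lemma SubW_eta : forall s : Sigma, SubW (fun m : Sigma -> A => m = eta s).
Proof. intros s m E; subst; apply isW_eta; auto. Qed.

Lemma SubW_den : forall C s, SubW (den C s).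
Proof. intros C s m H; eapply den_isW; eauto. Qed.

Lemma lift : forall C m, isW m -> (forall x, m x <> z0 -> Def C x) ->
  (forall x, m x <> z0 -> derives (fun m' => m' = eta x) C (den C x)) ->
  derives (fun m' => m' = m) C (Post C m).
Proof.
  intros C m Hm HD HP.
  assert (Hg : exists g : Sigma -> Sigma -> A, forall x, m x <> z0 -> den C x (g x)).
  { apply (choice_fun (P := fun x y => m x <> z0 -> den C x y)). intros x.
    destruct (excluded_middle_informative (m x = z0)) as [E|E].
    - exists (fun _ => z0); intros; contradiction.
    - destruct (HD x E) as [y Hy]; eauto. }
  destruct Hg as [g Hg].
  set (P := fun t : supp m => scaleL (m (proj1_sig t)) (fun m' : Sigma -> A => m' = eta (proj1_sig t))).
  set (P' := fun t : supp m => scaleL (m (proj1_sig t)) (den C (proj1_sig t))).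
  assert (Hder : derives (bigoplus P) C (bigoplus P')).
  { apply R_Choice.
    - intros r [ms [_ [H _]]]; auto.
    - intros r [ms [_ [H _]]]; auto.
    - intros [x Hx]. unfold P, P'; simpl. apply R_Scale.
      + intros r [m0 [E1 E2]]; subst. apply isW_mull; auto. apply isW_eta; auto.
      + intros r [m0 [E1 E2]]; subst. apply isW_mull; auto. eapply den_isW; eauto.
      + apply HP; auto. }
  eapply R_Conseq; [ | | | apply Hder | ].
  - intros m' E; subst; auto.
  - intros r Hr; eapply Post_isW; eauto.
  - intros m' E; subst. exists (fun t y => pm (m (proj1_sig t)) (eta (proj1_sig t) y)). split.
    + intros t. exists (eta (proj1_sig t)); auto.
    + split; auto. intros y.
      destruct (excluded_middle_informative (m y = z0)) as [E|E].
      * rewrite E. apply (Sum_zero Hord). intros [x Hx]; simpl.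
        rewrite eta_diff; [apply pmul_0r|]. intro; subst; contradiction.
      * pose proof (Sum_one Hord (f := fun t : supp m => pm (m (proj1_sig t)) (eta (proj1_sig t) y))
                     (i0 := exist _ y E)) as H1.
        simpl in H1. rewrite eta_same, pmul_1r in H1. apply H1.
        intros [x Hx] Hne; simpl. rewrite eta_diff; [apply pmul_0r|]. intro; subst.
        apply Hne; apply supp_inj; auto.
  - intros r [ms [Hms [Hr Hsum]]]. exists g; split; auto. split; auto. intros y.
    eapply Sum_ext; [|apply (Hsum y)]. intros [x Hx]; simpl.
    destruct (Hms (exist _ x Hx)) as [m0 [Hm0 E]]; simpl in *. rewrite E.
    rewrite (den_det Hm0 (Hg x Hx)); auto.
Qed.

Lemma PL_Skip : PL (Skip A Act TestI).
Proof.
  intros s _. apply R_Conseq with (phi := fun m => m = eta s) (psi := fun m => m = eta s).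
  - apply SubW_eta.
  - apply SubW_den.
  - auto.
  - apply R_Skip, SubW_eta.
  - simpl; auto.
Qed.

Lemma PL_Atom : forall a, PL (Atom A TestI a).
Proof.
  intros a s _. apply R_Ax; [| apply SubW_eta | apply SubW_den].
  split; [apply SubW_eta|]. split; [apply SubW_den|]. split; [eauto|].
  intros m E; subst. exists (actI a), (actI a s). simpl. split; [intros; reflexivity|].
  split; [apply BindF_eta; auto | reflexivity].
Qed.

Lemma PL_Assume : forall e, PL (Assume Act e).
Proof.
  intros e s _.
  assert (HW : SubW (scaleR (fun m : Sigma -> A => m = eta s) (ev e s))).
  { intros r [m0 [E1 E2]]; subst. apply isW_single with s; auto. intros y Hy.
    rewrite eta_diff; auto. apply pmul_0l. }
  apply R_Conseq with (phi := fun m => m = eta s) (psi := scaleR (fun m : Sigma -> A => m = eta s) (ev e s)).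
  - apply SubW_eta.
  - apply SubW_den.
  - auto.
  - apply R_Assume; [apply SubW_eta | auto |].
    intros m x E Hx; subst. destruct (excluded_middle_informative (x = s)); subst; auto.
    rewrite eta_diff in Hx; auto. contradiction.
  - intros r [m0 [E1 E2]]; subst; simpl. apply functional_extensionality; intros y.
    destruct (excluded_middle_informative (s = y)) as [E|E].
    + subst; rewrite eta_same, pmul_1l, pmul_1r; auto.
    + rewrite eta_diff by auto. rewrite pmul_0l, pmul_0r; auto.
Qed.

Lemma PL_Seq : forall C1 C2, PL C1 -> PL C2 -> PL (Seq C1 C2).
Proof.
  intros C1 C2 P1 P2 s [m [m1 [g [H1 [H2 H3]]]]].
  apply R_Seq with (th := den C1 s); [apply SubW_eta | apply SubW_den | |].
  - apply P1; exists m1; auto.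
  - eapply R_Conseq; [apply SubW_den | apply SubW_den | | apply (lift (C := C2) (m := m1)) | ].
    + intros m' Hm'. eapply den_det; eauto.
    + eapply den_isW; eauto.
    + intros x Hx; exists (g x); auto.
    + intros x Hx; apply P2; exists (g x); auto.
    + intros r [g' [Hg' Hb]]. simpl. exists m1, g'; auto.
Qed.

Lemma PL_Plus : forall C1 C2, PL C1 -> PL C2 -> PL (Plus C1 C2).
Proof.
  intros C1 C2 P1 P2 s [m [m1 [m2 [H1 [H2 H3]]]]].
  assert (HW : SubW (oplus (den C1 s) (den C2 s))) by (intros r [ms [_ [H _]]]; auto).
  apply R_Conseq with (phi := fun m => m = eta s) (psi := oplus (den C1 s) (den C2 s)).
  - apply SubW_eta.
  - apply SubW_den.
  - auto.
  - apply R_Plus; [apply SubW_eta | auto | |].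
    + apply P1; exists m1; auto.
    + apply P2; exists m2; auto.
  - intros r [ms [Hms [Hr Hsum]]]. simpl. exists (ms true), (ms false).
    split; [apply (Hms true)|]. split; [apply (Hms false)|]. split; auto.
    intros y. apply (Sum_bool Hord (f := fun b => ms b y)); auto.
Qed.


Lemma Def_Assume : forall e x, Def (Assume Act e) x.
Proof. intros e x; exists (fun y => pm (ev e x) (eta x y)); simpl; auto. Qed.

Section IterSem.
Variables (C : prog) (e e' : expr A TestI) (F : Sigma -> Sigma -> A).
Hypothesis HF : IsLfp testI (den C) e e' F.
Variable gC : Sigma -> Sigma -> A.
Hypothesis HgC : forall x, den C x (gC x).

Local Notation a := (ev e).
Local Notation b := (ev e').

Lemma PhiRel_elim : forall f x r, PhiRel testI (den C) e e' f x r ->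
  exists B, BindF f (gC x) B /\ WAdd (fun y => pm (a x) (B y)) (fun y => pm (b x) (eta x y)) r.
Proof.
  intros f x r [mc [B [H1 [H2 H3]]]]. rewrite (den_det H1 (HgC x)) in H2. eauto.
Qed.

Lemma PhiRel_intro : forall f x r B, BindF f (gC x) B ->
  WAdd (fun y => pm (a x) (B y)) (fun y => pm (b x) (eta x y)) r -> PhiRel testI (den C) e e' f x r.
Proof. intros f x r B H1 H2. exists (gC x), B; auto. Qed.

Definition kle (f g : Sigma -> Sigma -> A) := forall x y, nle (f x y) (g x y).

Lemma BF_exists : exists BF : Sigma -> Sigma -> A, forall x, BindF F (gC x) (BF x) /\
   WAdd (fun y => pm (a x) (BF x y)) (fun y => pm (b x) (eta x y)) (F x).
Proof.
  apply (choice_fun (P := fun x B => BindF F (gC x) B /\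
     WAdd (fun y => pm (a x) (B y)) (fun y => pm (b x) (eta x y)) (F x))).
  intros x. apply PhiRel_elim. apply (proj1 (proj2 HF)).
Qed.

Lemma Phi_def : forall f x, kle f F -> exists r, PhiRel testI (den C) e e' f x r /\ forall y, nle (r y) (F x y).
Proof.
  intros f x Hle. destruct BF_exists as [BF HBF]. destruct (HBF x) as [HB1 [HW HB2]].
  pose proof (BindF_sum HB1) as HB1'. clear HB1. rename HB1' into HB1.
  assert (H1 : forall y, exists v, Sum (fun z => pm (gC x z) (f z y)) v /\ nle v (BF x y)).
  { intros y. apply (Sum_bound Hord Hsc (g := fun z => pm (gC x z) (F z y))); auto.
    intros z; apply mul_mono_l; apply Hle. }
  destruct (choice_fun H1) as [B HB].
  assert (HBf : BindF f (gC x) B).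
  { apply BindF_mk; [|intros y; apply (HB y)].
    apply (isW_le Hord Hsc (m' := BF x)); [intros y; apply (HB y)|]. apply (proj1 (HBF x)). }
  assert (H2 : forall y, exists r, pa (pm (a x) (B y)) (pm (b x) (eta x y)) = Some r /\ nle r (F x y)).
  { intros y. apply (add_below (u' := pm (a x) (BF x y)) (v' := pm (b x) (eta x y))); auto.
    - apply mul_mono_l; apply (HB y).
    - apply nle_refl; auto. }
  destruct (choice_fun H2) as [r Hr].
  exists r; split; [|intros y; apply (Hr y)].
  apply PhiRel_intro with B; auto. split; [|intros y; apply (Hr y)].
  apply (isW_le Hord Hsc (m' := F x)); auto. intros y; apply (Hr y).
Qed.

Lemma Phi_mono : forall f f' x r r', kle f f' -> PhiRel testI (den C) e e' f x r ->
  PhiRel testI (den C) e e' f' x r' -> forall y, nle (r y) (r' y).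
Proof.
  intros f f' x r r' Hle H H' y.
  destruct (PhiRel_elim H) as [B [HB [_ HW]]]. destruct (PhiRel_elim H') as [B' [HB' [_ HW']]].
  assert (Hm : nle (B y) (B' y)).
  { apply (Sum_mono Hord Hsc (f := fun z => pm (gC x z) (f z y)) (g := fun z => pm (gC x z) (f' z y)));
      [|apply (BindF_sum HB) | apply (BindF_sum HB')]. intros z; apply mul_mono_l; apply Hle. }
  eapply (add_mono Hord); [apply mul_mono_l, Hm | apply nle_refl; auto | apply HW | apply HW'].
Qed.

Definition step (f : Sigma -> Sigma -> A) (x : Sigma) : Sigma -> A :=
  epsilon (inhabits (fun _ : Sigma => z0))
    (fun r => PhiRel testI (den C) e e' f x r /\ forall y, nle (r y) (F x y)).

Fixpoint it (k : nat) : Sigma -> Sigma -> A :=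
  match k with 0 => fun _ _ => z0 | S k => fun x => step (it k) x end.

Lemma step_spec : forall f x, kle f F ->
  PhiRel testI (den C) e e' f x (step f x) /\ forall y, nle (step f x y) (F x y).
Proof.
  intros f x Hle. unfold step. apply epsilon_spec. apply Phi_def; auto.
Qed.

Lemma it_le : forall k, kle (it k) F.
Proof.
  induction k; intros x y; simpl.
  - apply nle_0.
  - apply (proj2 (step_spec x IHk)).
Qed.

Lemma it_phi : forall k x, PhiRel testI (den C) e e' (it k) x (it (S k) x).
Proof. intros k x. simpl. apply (proj1 (step_spec x (it_le k))). Qed.

Lemma it_mono1 : forall k, kle (it k) (it (S k)).
Proof.
  induction k; intros x y.
  - apply nle_0.
  - eapply Phi_mono; [apply IHk | apply it_phi | apply it_phi].
Qed.

Lemma it_mono : forall k k', k <= k' -> kle (it k) (it k').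
Proof.
  intros k k' H; induction H; intros x y.
  - apply nle_refl; auto.
  - eapply (nle_trans Hord); [apply IHle | apply it_mono1].
Qed.

Lemma it_directed : forall x y, directed (rng (fun k => it k x y)).
Proof.
  intros x y. apply net_directed with (R := le); [apply dirK_nat|]. intros k k' H; apply it_mono; auto.
Qed.

Definition G (x y : Sigma) : A :=
  epsilon (inhabits z0) (fun t => is_lub (rng (fun k => it k x y)) t).

Lemma G_lub : forall x y, is_lub (rng (fun k => it k x y)) (G x y).
Proof.
  intros x y. unfold G. apply epsilon_spec. apply (proj1 Hsc). apply it_directed.
Qed.

Lemma G_le : forall x y, nle (G x y) (F x y).
Proof. intros x y. apply (proj2 (G_lub x y)). intros z [k E]; subst; apply it_le. Qed.

Lemma G_shift : forall x y, is_lub (rng (fun k => it (S k) x y)) (G x y).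
Proof.
  intros x y. refine (proj2 (lub_cofinal Hord (P := rng (fun k => it (S k) x y)) (Q := rng (fun k => it k x y))
      (G x y) _ _) (G_lub x y)).
  - intros z [k E]; exists (S k); auto.
  - intros z [k E]; subst. exists (it (S k) x y); split; [exists k; auto|]. apply it_mono1.
Qed.

Lemma G_fix : forall x, PhiRel testI (den C) e e' G x (G x).
Proof.
  intros x.
  assert (HBk : forall k, exists B, BindF (it k) (gC x) B /\
     WAdd (fun y => pm (a x) (B y)) (fun y => pm (b x) (eta x y)) (it (S k) x)).
  { intros k; apply PhiRel_elim, it_phi. }
  destruct (choice_fun HBk) as [Bk HB].
  destruct BF_exists as [BF HBF].
  assert (Bmono : forall k k' y, k <= k' -> nle (Bk k y) (Bk k' y)).
  { intros k k' y H. apply (Sum_mono Hord Hsc (f := fun z => pm (gC x z) (it k z y))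
       (g := fun z => pm (gC x z) (it k' z y))); [| apply (BindF_sum (proj1 (HB k))) | apply (BindF_sum (proj1 (HB k')))].
    intros z; apply mul_mono_l, it_mono; auto. }
  assert (Bdir : forall y, directed (rng (fun k => Bk k y))).
  { intros y; apply net_directed with (R := le); [apply dirK_nat|]. intros; apply Bmono; auto. }
  assert (HR : forall y, exists R, is_lub (rng (fun k => Bk k y)) R).
  { intros y; apply (proj1 Hsc); auto. }
  destruct (choice_fun HR) as [BG HBG].
  assert (HS : forall y, Sum (fun z => pm (gC x z) (G z y)) (BG y)).
  { intros y. apply (mct Hord Hsc (c := fun k z => pm (gC x z) (it k z y)) (S := fun k => Bk k y)).
    - intros k k' z H; apply mul_mono_l, it_mono; auto.
    - intros k; apply (BindF_sum (proj1 (HB k))).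
    - intros z. destruct Hsc as [_ [_ [_ H4]]].
      pose proof (H4 _ (gC x z) _ (it_directed z y) (G_lub z y)) as H.
      eapply lub_ext; [|apply H]. intros w; split.
      + intros [v [[k E1] E2]]; subst; exists k; auto.
      + intros [k E]; subst; exists (it k z y); split; auto; exists k; auto.
    - apply HBG. }
  apply PhiRel_intro with BG.
  - apply BindF_mk; auto.
    apply (isW_le Hord Hsc (m' := BF x)); [|apply (proj1 (HBF x))].
    intros y. apply (proj2 (HBG y)). intros w [k E]; subst.
    apply (Sum_mono Hord Hsc (f := fun z => pm (gC x z) (it k z y)) (g := fun z => pm (gC x z) (F z y)));
      [| apply (BindF_sum (proj1 (HB k))) | apply (BindF_sum (proj1 (HBF x)))].
    intros z; apply mul_mono_l, it_le.
  - split.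
    + apply (isW_le Hord Hsc (m' := F x)); [intros y; apply G_le|]. apply (proj1 HF).
    + intros y. destruct Hsc as [_ [H2 [_ H4]]].
      pose proof (H4 _ (a x) _ (Bdir y) (HBG y)) as Ha.
      assert (Hd : directed (fun z => exists v, rng (fun k => Bk k y) v /\ z = pm (a x) v)).
      { split.
        - exists (pm (a x) (Bk 0 y)), (Bk 0 y); split; auto; exists 0; auto.
        - intros u v [u' [[k1 E1] E1']] [v' [[k2 E2] E2']]; subst.
          exists (pm (a x) (Bk (max k1 k2) y)); split; [exists (Bk (max k1 k2) y); split; auto; exists (max k1 k2); auto|].
          split; apply mul_mono_l, Bmono; lia. }
      destruct (H2 _ (pm (b x) (eta x y)) _ Hd Ha) as [t [Ht Hlub]].
      { intros u [v [[k E1] E2]]; subst. exists (it (S k) x y). apply (proj2 (proj2 (HB k))). }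
      rewrite Ht. f_equal. eapply (lub_unique Hord); [apply Hlub|].
      eapply lub_ext; [|apply G_shift]. intros w; split.
      * intros [k E]; subst. exists (pm (a x) (Bk k y)); split; [exists (Bk k y); split; auto; exists k; auto|].
        apply (proj2 (proj2 (HB k))).
      * intros [u [[v [[k E1] E2]] Hw]]; subst. exists k.
        rewrite (proj2 (proj2 (HB k)) y) in Hw. inversion Hw; auto.
Qed.

Lemma F_lub : forall x y, is_lub (rng (fun k => it k x y)) (F x y).
Proof.
  intros x y. replace (F x y) with (G x y); [apply G_lub|].
  apply (nle_antisym Hord); [apply G_le|].
  assert (GW : forall x, isW (G x)).
  { intros z. apply (isW_le Hord Hsc (m' := F z)); [intros w; apply G_le|]. apply (proj1 HF). }
  destruct (proj2 (proj2 HF) G GW G_fix x) as [d [_ Hd]].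
  exists (d y); auto.
Qed.


Lemma seqA_den : forall x, den (Seq (Assume Act e) C) x (fun y => pm (a x) (gC x y)).
Proof.
  intros x. simpl. exists (fun y => pm (a x) (eta x y)), gC. split; auto. split; [intros; apply HgC|].
  apply BindF_mk.
  - apply isW_mull; auto. eapply den_isW; apply HgC.
  - intros y. pose proof (Sum_one Hord (f := fun z => pm (pm (a x) (eta x z)) (gC z y)) (i0 := x)) as H.
    simpl in H. rewrite eta_same, pmul_1r in H. apply H.
    intros z Hz. rewrite eta_diff by auto. rewrite pmul_0r, pmul_0l; auto.
Qed.

Section Chain.
Variable s : Sigma.
Variables (M E : nat -> Sigma -> A).
Hypothesis HM0 : M 0 = eta s.
Hypothesis HMS : forall n, Post (Seq (Assume Act e) C) (M n) (M (S n)).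
Hypothesis HE : forall n, Post (Assume Act e') (M n) (E n).

Lemma Mstep : forall n y, Sum (fun z => pm (M n z) (pm (a z) (gC z y))) (M (S n) y).
Proof.
  intros n y. destruct (HMS n) as [g [Hg Hb]].
  eapply Sum_ext; [|apply (BindF_sum Hb y)]. intros z; simpl.
  destruct (excluded_middle_informative (M n z = z0)) as [Z|Z].
  - rewrite Z, !pmul_0l; auto.
  - rewrite (den_det (Hg z Z) (seqA_den z)); auto.
Qed.

Lemma Estep : forall n y, Sum (fun z => pm (M n z) (pm (b z) (eta z y))) (E n y).
Proof.
  intros n y. destruct (HE n) as [g [Hg Hb]].
  eapply Sum_ext; [|apply (BindF_sum Hb y)]. intros z; simpl.
  destruct (excluded_middle_informative (M n z = z0)) as [Z|Z].
  - rewrite Z, !pmul_0l; auto.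
  - pose proof (Hg z Z) as H; simpl in H. rewrite H; auto.
Qed.

Lemma D_def : forall j y, exists v, Sum (fun x => pm (M j x) (F x y)) v.
Proof.
  destruct BF_exists as [BF HBF].
  induction j; intros y.
  - rewrite HM0. exists (F s y).
    pose proof (Sum_one Hord (f := fun z => pm (eta s z) (F z y)) (i0 := s)) as H.
    simpl in H. rewrite eta_same, pmul_1l in H. apply H.
    intros z Hz. rewrite eta_diff by auto. apply pmul_0l.
  - destruct (IHj y) as [v Hv].
    set (d := fun z x => pm (pm (M j z) (pm (a z) (gC z x))) (F x y)).
    set (r := fun z => pm (M j z) (pm (a z) (BF z y))).
    assert (Hd : forall z, Sum (d z) (r z)).
    { intros z. pose proof (Sum_mull Hsc (M j z) (Sum_mull Hsc (a z) (BindF_sum (proj1 (HBF z)) y))) as H.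
      eapply Sum_ext; [|apply H].
      intros x; unfold d; simpl. rewrite !pmul_assoc; auto. }
    assert (Hr : exists T, Sum r T).
    { destruct (Sum_bound Hord Hsc (f := r) (g := fun z => pm (M j z) (F z y)) (t := v)) as [T [HT _]]; eauto.
      intros z; unfold r. apply mul_mono_l. apply (nle_addr (proj2 (proj2 (HBF z)) y)). }
    destruct Hr as [T HT].
    destruct (fubini Hord Hsc Hd HT) as [c [Hc HcT]].
    exists T. eapply Sum_ext; [|apply HcT]. intros x.
    eapply (Sum_unique Hord); [apply (Hc x)|].
    apply (Sum_mulr Hsc (F x y) (Mstep j x)).
Qed.

Lemma exit_sum : forall k j y, exists v, Sum (fun x => pm (M j x) (it k x y)) v /\
   fsum (fun n => E (j + n) y) (seq 0 k) = Some v.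
Proof.
  induction k; intros j y.
  - exists z0; split; auto. simpl. apply (Sum_zero Hord). intros x; apply pmul_0r.
  - destruct (D_def j y) as [w Hw].
    destruct (Sum_bound Hord Hsc (f := fun x => pm (M j x) (it (S k) x y)) (g := fun x => pm (M j x) (F x y)) (t := w))
      as [tot [Htot _]]; auto.
    { intros x; apply mul_mono_l, it_le. }
    assert (HBk : forall x, exists B, BindF (it k) (gC x) B /\
       WAdd (fun y => pm (a x) (B y)) (fun y => pm (b x) (eta x y)) (it (S k) x)).
    { intros x; apply PhiRel_elim, it_phi. }
    destruct (choice_fun HBk) as [Bk HB].
    destruct (Sum_add_inv Hord Hsc (f := fun x => pm (M j x) (pm (a x) (Bk x y)))
       (g := fun x => pm (M j x) (pm (b x) (eta x y))) Htot) as [X1 [X2 [H1 [H2 H12]]]].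
    { intros x. apply pmul_addl. apply (proj2 (proj2 (HB x))). }
    rewrite (Sum_unique Hord H2 (Estep j y)) in H12.
    set (a' := fun x z => pm (M j x) (pm (a x) (pm (gC x z) (it k z y)))).
    assert (Ha' : forall x, Sum (a' x) (pm (M j x) (pm (a x) (Bk x y)))).
    { intros x. exact (Sum_mull Hsc (M j x) (Sum_mull Hsc (a x) (BindF_sum (proj1 (HB x)) y))). }
    destruct (fubini Hord Hsc Ha' H1) as [c [Hc HcT]].
    assert (HX1 : Sum (fun z => pm (M (S j) z) (it k z y)) X1).
    { eapply Sum_ext; [|apply HcT]. intros z. eapply (Sum_unique Hord); [apply (Hc z)|].
      eapply Sum_ext; [|apply (Sum_mulr Hsc (it k z y) (Mstep j z))].
      intros x; unfold a'; simpl. rewrite !pmul_assoc; auto. }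
    destruct (IHk (S j) y) as [v [Hv1 Hv2]].
    rewrite (Sum_unique Hord Hv1 HX1) in Hv2.
    exists tot; split; auto.
    replace (seq 0 (S k)) with (0 :: map S (seq 0 k)) by (simpl; rewrite seq_shift; auto).
    simpl. rewrite fsum_map.
    replace (fun j0 => E (j + S j0) y) with (fun n => E (S j + n) y)
      by (apply functional_extensionality; intros n; rewrite Nat.add_succ_r; auto).
    rewrite Hv2; simpl. rewrite Nat.add_0_r, padd_comm; auto.
Qed.

Lemma chain_sum : forall y, Sum (fun n => E n y) (F s y).
Proof.
  intros y.
  assert (Hp : forall k, fsum (fun n => E n y) (seq 0 k) = Some (it k s y)).
  { intros k. destruct (exit_sum k 0 y) as [v [Hv1 Hv2]]. simpl in Hv2. rewrite Hv2. f_equal.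
    eapply (Sum_unique Hord); [apply Hv1|]. rewrite HM0.
    pose proof (Sum_one Hord (f := fun z => pm (eta s z) (it k z y)) (i0 := s)) as H.
    simpl in H. rewrite eta_same, pmul_1l in H. apply H.
    intros z Hz. rewrite eta_diff by auto. apply pmul_0l. }
  apply (Sum_nat_prefix Hord).
  - intros k; rewrite Hp; eauto.
  - eapply lub_ext; [|apply (F_lub s y)]. intros z; split.
    + intros [k E1]; subst; exists k; auto.
    + intros [k E1]. rewrite Hp in E1. inversion E1; subst. exists k; auto.
Qed.

End Chain.
End IterSem.

Fixpoint chain (D : prog) (s : Sigma) (n : nat) : asrt A Sigma :=
  match n with
  | 0 => fun m => m = eta s
  | S n => fun r => exists m, chain D s n m /\ Post D m r
  end.

Lemma chain_SubW : forall D s n, SubW (chain D s n).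
Proof.
  intros D s n; destruct n; simpl.
  - apply SubW_eta.
  - intros r [m [_ H]]; eapply Post_isW; eauto.
Qed.

Lemma chain_unique : forall D s n m m', chain D s n m -> chain D s n m' -> m = m'.
Proof.
  intros D s n; induction n; simpl; intros m m' H H'.
  - congruence.
  - destruct H as [m0 [H0 HP]]; destruct H' as [m0' [H0' HP']].
    rewrite (IHn _ _ H0 H0') in HP. eapply Post_det; eauto.
Qed.

Lemma lift_set : forall D (Phi : asrt A Sigma), SubW Phi ->
  (forall m, Phi m -> forall x, m x <> z0 -> Def D x) -> PL D ->
  derives Phi D (fun r => exists m, Phi m /\ Post D m r).
Proof.
  intros D Phi HW HD HP.
  set (T := { m : Sigma -> A | Phi m }).
  assert (Hder : derives (fun m => exists t : T, (fun t m' => m' = proj1_sig t) t m) D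
                         (fun r => exists t : T, Post D (proj1_sig t) r)).
  { apply R_Exists with (P := fun (t : T) m' => m' = proj1_sig t) (P' := fun (t : T) => Post D (proj1_sig t)).
    - intros m [[m0 H0] E]; simpl in E; subst; auto.
    - intros r [t Hr]; eapply Post_isW; eauto.
    - intros [m0 H0]; simpl. apply lift.
      + apply HW; auto.
      + intros x Hx; eapply HD; eauto.
      + intros x Hx; apply HP; eapply HD; eauto. }
  eapply R_Conseq; [apply HW | | | apply Hder | ].
  - intros r [m [_ H]]; eapply Post_isW; eauto.
  - intros m Hm; exists (exist _ m Hm); auto.
  - intros r [[m0 H0] HPo]; simpl in HPo. eauto.
Qed.

Lemma PL_Iter : forall C e e', PL C -> PL (Iter C e e').
Proof.
  intros C e e' HC s [m [F [HF Em]]]. subst m.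
  assert (HDC : forall x, exists mc, den C x mc).
  { intros x. destruct (proj1 (proj2 HF) x) as [mc [B [H _]]]; eauto. }
  destruct (choice_fun HDC) as [gC HgC].
  set (D := Seq (Assume Act e) C).
  assert (PLD : PL D) by (apply PL_Seq; [intros s0 H0; apply PL_Assume|]; auto).
  assert (DefD : forall x, Def D x) by (intros x; exists (fun y => pm (ev e x) (gC x y)); apply (seqA_den e HgC)).
  set (psis := fun n r => exists m, chain D s n m /\ Post (Assume Act e') m r).
  apply R_Conseq with (phi := chain D s 0) (psi := fun r => r = F s).
  - apply SubW_eta.
  - apply SubW_den.
  - intros m Hm; exact Hm.
  - apply R_Iter with (psis := psis).
    + apply chain_SubW.
    + intros r E; subst; apply (proj1 HF).
    + intros ms Hms.
      assert (HM : forall n, exists m, chain D s n m).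
      { intros n; destruct (Hms n) as [m [Hm _]]; eauto. }
      destruct (choice_fun HM) as [M HMc].
      exists (F s); split; auto. split; [apply (proj1 HF)|]. intros y.
      apply (chain_sum HF HgC (s := s) (M := M) (E := ms)).
      * apply (HMc 0).
      * intros n. destruct (HMc (S n)) as [m [Hm HP]]. rewrite (chain_unique Hm (HMc n)) in HP; auto.
      * intros n. destruct (Hms n) as [m [Hm HP]]. rewrite (chain_unique Hm (HMc n)) in HP; auto.
    + intros n. apply (lift_set (Phi := chain D s n)); auto.
      * apply chain_SubW.
    + intros n. apply (lift_set (Phi := chain D s n)).
      * apply chain_SubW.
      * intros; apply Def_Assume.
      * intros s0 H0; apply PL_Assume; auto.
  - intros r E; subst; simpl. exists F; auto.
Qed.

Lemma point_lemma : forall C, PL C.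
Proof.
  induction C.
  - apply PL_Skip.
  - apply PL_Seq; auto.
  - apply PL_Plus; auto.
  - apply PL_Assume.
  - apply PL_Iter; auto.
  - apply PL_Atom.
Qed.

Theorem completeness : forall (C : prog) (phi psi : asrt A Sigma),
  SubW phi -> SubW psi -> valid actI testI phi C psi -> derives phi C psi.
Proof.
  intros C phi psi Hphi Hpsi Hv.
  set (T := { m : Sigma -> A | phi m }).
  assert (Hder : derives (fun m => exists t : T, (fun t m' => m' = proj1_sig t) t m) C
                         (fun r => exists t : T, Post C (proj1_sig t) r)).
  { apply R_Exists with (P := fun (t : T) m' => m' = proj1_sig t) (P' := fun (t : T) => Post C (proj1_sig t)).
    - intros m [[m0 H0] E]; simpl in E; subst; auto.
    - intros r [t Hr]; eapply Post_isW; eauto.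
    - intros [m0 H0]; simpl. destruct (Hv m0 H0) as [g [r [Hg [Hb _]]]].
      apply lift.
      + apply Hphi; auto.
      + intros x Hx; exists (g x); auto.
      + intros x Hx; apply point_lemma; exists (g x); auto. }
  eapply R_Conseq; [apply Hphi | apply Hpsi | | apply Hder | ].
  - intros m Hm; exists (exist _ m Hm); auto.
  - intros r [[m0 H0] HP]; simpl in HP. destruct (Hv m0 H0) as [g [r' [Hg [Hb Hr']]]].
    rewrite (Post_det HP (ex_intro _ g (conj Hg Hb))); auto.
Qed.

End Prog.


Theorem theorem3p7
  (A : PSR) (HA_ord : naturally_ordered A) (HA_scott : scott_continuous A)
  (HA_top : has_top A)
  (Sigma Act : Type) (actI : Act -> Sigma -> Sigma -> A)
  (HactW : forall a s, isW (actI a s))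
  (TestI : Type) (testI : TestI -> Sigma -> Prop)
  (C : prog A Act TestI) (phi psi : asrt A Sigma) :
  SubW phi -> SubW psi ->
  well_formed actI testI C ->
  valid actI testI phi C psi ->
  derives testI (Omega actI testI) phi C psi.
Proof.
  intros Hphi Hpsi _ Hv.
  exact (completeness HA_ord HA_scott HactW Hphi Hpsi Hv).
Qed.
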